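(* In the Markovian PRP setting below, assume that $g^p_t$ is $C^1$ and $g^a_t,c_t$ are $C^2$ for $t\in\mathbb{T}$. Then for $\beta\in\mathbb{R}$, $(A,\gamma)\in\mathbb{R}^N\times\mathbb{R}^D$: $$(A,\gamma)\in\mathbb{C}_t(\beta)\iff \beta\mu-\nabla c_t(A)+\beta\sigma\nabla g^a_t(\gamma)=0.$$ Moreover, let $\{(A_t,\beta_t,\gamma_t)\}_{t\in\mathbb{T}}$ be an optimal contract for the Principal (i.e. for each $t$, $(A_t,\beta_t,\gamma_t)$ maximizes $A\mu-c_t(A)+g^a_t(\gamma)+g^p_t(\sigma'A-\gamma)$ over $\beta\in\mathbb{R}$, $(A,\gamma)\in\mathbb{C}_t(\beta)$), and suppose that for every $t$ the matrix $\big[\,\mu+\sigma\nabla g^a_t(\gamma_t)\ \big|\ \beta_t\sigma\nabla^2g^a_t(\gamma_t)\ \big|\ -\nabla^2c_t(A_t)\,\big]\in\mathbb{R}^{N\times(1+D+N)}$ has full rank $N$. Then there exist $\lambda_t\in\mathbb{R}^N$ such that $$0=\beta_t\mu-\nabla c_t(A_t)+\beta_t\sigma\nabla g^a_t(\gamma_t),$$ $$0=\mu-\nabla c_t(A_t)+\sigma\nabla g^p_t(\sigma'A_t-\gamma_t)-\nabla^2c_t(A_t)\lambda_t,$$ $$0=\nabla g^a_t(\gamma_t)-\nabla g^p_t(\sigma'A_t-\gamma_t)+\beta_t\nabla^2g^a_t(\gamma_t)\sigma'\lambda_t,$$ $$0=\lambda_t\cdot[\mu+\sigma\nabla g^a_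t(\gamma_t)].$$
   Context: Markovian PRP setting: $T\in\mathbb{N}$, $\mathbb{T}=\{0,\dots,T-1\}$. The filtration $(\mathcal{F}_t)$ is generated by a $d$-dimensional process $\bar w$ observed by both parties; prices satisfy $\Delta P_{t+1}=diag(P_t)[\mu+\sigma\Delta\bar w_{t+1}]$ with $\mu\in\mathbb{R}^N$ and $\sigma\in\mathbb{R}^{N\times d}$ with linearly independent rows ($d\ge N$), so $\Delta\tilde P_{t+1}:=diag(P_t)^{-1}\Delta P_{t+1}=\mu+\sigma\Delta\bar w_{t+1}$. Predictable Representation Property: there are $(\mathcal{F}_t)$-adapted processes $w^{d+1},\dots,w^D$ such that $w=(\bar w,w^{d+1},\dots,w^D)$ has mutually uncorrelated, zero-mean increments with nontrivial finite second moments, independent of the past, and $L^0(\mathcal{F}_{t+1})=\{x+Z\Delta w_{t+1}:x\in L^0(\mathcal{F}_t),Z\in L^0(\mathcal{F}_t)^D\}$. $\sigma$ is identified with the $N\times D$ matrix obtained by appending $D-d$ zero columns; $\sigma'$ is its transpose. Preferences $U^a,U^p$ satisfy the usual conditions (normalized, proper, monotone, conditionally concave, translation invariant, time consistent); Markov assumption: the generators $g^l_t(z):=U^l_t(z\Delta w_{t+1})$ map $\mathbb{R}^D\to\mathbb{R}$ (deterministic), $l=a,p$; they are concave with $g^l_t(0)=0$. $c_t:\mathbb{R}^N\to\mathbb{R}$ strictly convex. In these variables a contract at time $t$ is $(A,\beta,\gamma)\in\mathbb{R}^N\times\mathbb{R}\times\mathbb{R}^D$ (Agent's continuation $\Gamma$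 has martingale part $\gamma\Delta w_{t+1}$), and $\mathbb{C}_t(\beta)$ is the set of $(A,\gamma)$ such that for all $\bar A\in\mathbb{R}^N$: $g^a_t(\gamma)-c_t(A)\ge\beta(\bar A-A)\mu+g^a_t(\gamma+\beta\sigma'(\bar A-A))-c_t(\bar A)$. *)

(* Defs.v *)
From Stdlib Require Import Reals.
From mathcomp Require Import ssreflect ssrfun ssrbool eqtype ssrnat seq fintype bigop.
Set Implicit Arguments.
Unset Strict Implicit.

Open Scope R_scope.

Definition vec (n : nat) := 'I_n -> R.
Definition mat (m n : nat) := 'I_m -> 'I_n -> R.

Definition vzero {n} : vec n := fun _ => 0.
Definition vadd {n} (x y : vec n) : vec n := fun i => x i + y i.
Definition vsub {n} (x y : vec n) : vec n := fun i => x i - y i.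
Definition vscale {n} (a : R) (x : vec n) : vec n := fun i => a * x i.

Definition dot {n} (x y : vec n) : R := \big[Rplus/0]_(i < n) (x i * y i).
Definition vnorm {n} (x : vec n) : R := sqrt (dot x x).

Definition mulmv {m n} (M : mat m n) (x : vec n) : vec m :=
  fun i => \big[Rplus/0]_(j < n) (M i j * x j).
Definition trmv {m n} (M : mat m n) (y : vec m) : vec n :=
  fun j => \big[Rplus/0]_(i < m) (M i j * y i).
Definition mulmm {m n p} (M : mat m n) (P : mat n p) : mat m p :=
  fun i k => \big[Rplus/0]_(j < n) (M i j * P j k).

Definition has_gradient {n} (f : vec n -> R) (G : vec n -> vec n) : Prop :=
  forall x : vec n, forall eps, 0 < eps -> exists delta, 0 < delta /\
    forall h : vec n, vnorm h < delta ->
      Rabs (f (vadd x h) - f x - dot (G x) h) <= eps * vnorm h.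

Definition vcontinuous {n} (F : vec n -> R) : Prop :=
  forall x : vec n, forall eps, 0 < eps -> exists delta, 0 < delta /\
    forall y : vec n, vnorm (vsub y x) < delta -> Rabs (F y - F x) < eps.

Definition is_C1 {n} (f : vec n -> R) (G : vec n -> vec n) : Prop :=
  has_gradient f G /\ forall i, vcontinuous (fun x => G x i).

Definition is_C2 {n} (f : vec n -> R) (G : vec n -> vec n) (H : vec n -> mat n n) : Prop :=
  is_C1 f G /\ forall i, is_C1 (fun x => G x i) (fun x j => H x i j).

Definition concave_fun {n} (f : vec n -> R) : Prop :=
  forall (x y : vec n) l, 0 <= l <= 1 ->
    l * f x + (1 - l) * f y <= f (vadd (vscale l x) (vscale (1 - l) y)).

Definition strictly_convex_fun {n} (f : vec n -> R) : Prop :=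
  forall (x y : vec n) l, x <> y -> 0 < l < 1 ->
    f (vadd (vscale l x) (vscale (1 - l) y)) < l * f x + (1 - l) * f y.

Definition full_row_rank {m n} (M : mat m n) : Prop :=
  forall lam : vec m, (forall j, trmv M lam j = 0) -> forall i, lam i = 0.

(* Horizontal block matrix [ v | M1 | M2 ] in R^{N x (1 + D + N)}. *)
Definition blk3 {N D} (v : vec N) (M1 : mat N D) (M2 : mat N N) : mat N (1 + D + N) :=
  fun i k => match split k with
             | inl k1 => match split k1 with
                         | inl _ => v i
                         | inr j => M1 i j
                         end
             | inr j => M2 i j
             end.

Definition Ct {N D} (mu : vec N) (sigma : mat N D) (ga : vec D -> R) (c : vec N -> R)
  (beta : R) (A : vec N) (gamma : vec D) : Prop :=
  forall Abar : vec N,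
    beta * dot (vsub Abar A) mu
      + ga (vadd gamma (vscale beta (trmv sigma (vsub Abar A)))) - c Abar
    <= ga gamma - c A.

Definition principal_obj {N D} (mu : vec N) (sigma : mat N D) (ga gp : vec D -> R)
  (c : vec N -> R) (A : vec N) (gamma : vec D) : R :=
  dot A mu - c A + ga gamma + gp (vsub (trmv sigma A) gamma).

Definition optimal_contract (T : nat) {N D} (mu : vec N) (sigma : mat N D)
  (ga gp : nat -> vec D -> R) (c : nat -> vec N -> R)
  (At : nat -> vec N) (betat : nat -> R) (gammat : nat -> vec D) : Prop :=
  forall t, (t < T)%N ->
    Ct mu sigma (ga t) (c t) (betat t) (At t) (gammat t) /\
    forall beta (A : vec N) (gamma : vec D),
      Ct mu sigma (ga t) (c t) beta A gamma ->
      principal_obj mu sigma (ga t) (gp t) (c t) A gamma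
        <= principal_obj mu sigma (ga t) (gp t) (c t) (At t) (gammat t).

(* Main.v *)
Require Import Defs.
From Stdlib Require Import Reals Lra Classical FunctionalExtensionality.
From HB Require Import structures.
From mathcomp Require Import ssreflect ssrfun ssrbool eqtype ssrnat seq fintype bigop.
Open Scope R_scope.
Set Implicit Arguments.
Unset Strict Implicit.

HB.instance Definition _ := Monoid.isComLaw.Build R 0 Rplus
  (fun x y z => esym (Rplus_assoc x y z)) Rplus_comm Rplus_0_l.
HB.instance Definition _ := Monoid.isMulLaw.Build R 0 Rmult Rmult_0_l Rmult_0_r.
HB.instance Definition _ := Monoid.isAddLaw.Build R Rmult Rplus
  Rmult_plus_distr_r Rmult_plus_distr_l.


Lemma sum_add n (F G : 'I_n -> R) : \big[Rplus/0]_(i < n) (F i + G i) = \big[Rplus/0]_(i < n) F i + \big[Rplus/0]_(i < n) G i.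
Proof. exact: big_split. Qed.

Lemma sum_scal n (c : R) (F : 'I_n -> R) : c * \big[Rplus/0]_(i < n) F i = \big[Rplus/0]_(i < n) (c * F i).
Proof. exact: big_distrr. Qed.

Lemma sum_scalr n (c : R) (F : 'I_n -> R) : \big[Rplus/0]_(i < n) F i * c = \big[Rplus/0]_(i < n) (F i * c).
Proof. exact: big_distrl. Qed.

Lemma sum_zero n (F : 'I_n -> R) : (forall i, F i = 0) -> \big[Rplus/0]_(i < n) F i = 0.
Proof. by move=> H; apply: big1 => i _; apply: H. Qed.

Lemma sum_ext n (F G : 'I_n -> R) : (forall i, F i = G i) -> \big[Rplus/0]_(i < n) F i = \big[Rplus/0]_(i < n) G i.
Proof. by move=> H; apply: eq_bigr => i _; apply: H. Qed.

Lemma sum_le n (F G : 'I_n -> R) : (forall i, F i <= G i) -> \big[Rplus/0]_(i < n) F i <= \big[Rplus/0]_(i < n) G i.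
Proof.
move=> H; apply: (big_ind2 (fun a b => a <= b)) => //; first lra.
by move=> *; apply: Rplus_le_compat.
Qed.

Lemma sum_ge0 n (F : 'I_n -> R) : (forall i, 0 <= F i) -> 0 <= \big[Rplus/0]_(i < n) F i.
Proof. move=> H; apply: (big_ind (fun a => 0 <= a)) => //; [lra | move=> *; lra]. Qed.

Lemma sum_abs n (F : 'I_n -> R) : Rabs (\big[Rplus/0]_(i < n) F i) <= \big[Rplus/0]_(i < n) Rabs (F i).
Proof.
apply: (big_ind2 (fun a b => Rabs a <= b)) => //; first by rewrite Rabs_R0; lra.
- move=> a b c d H1 H2; apply: Rle_trans (Rabs_triang _ _) _; lra.
- move=> i _; lra.
Qed.

Lemma sum_neg n (F : 'I_n -> R) : \big[Rplus/0]_(i < n) (- F i) = - \big[Rplus/0]_(i < n) F i.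
Proof.
apply: (@Rplus_eq_reg_l (\big[Rplus/0]_(i < n) F i)).
rewrite -sum_add sum_zero; [lra | move=> i; lra].
Qed.

Lemma sum_sub n (F G : 'I_n -> R) : \big[Rplus/0]_(i < n) (F i - G i) = \big[Rplus/0]_(i < n) F i - \big[Rplus/0]_(i < n) G i.
Proof. rewrite /Rminus sum_add sum_neg //. Qed.

Lemma sum_term n (F : 'I_n -> R) j : (forall i, 0 <= F i) -> F j <= \big[Rplus/0]_(i < n) F i.
Proof.
move=> H; rewrite (bigD1 j) //=.
have : 0 <= \big[Rplus/0]_(i < n | i != j) F i.
  apply: (big_ind (fun a => 0 <= a)) => //; [lra | move=> *; lra].
move=> Hp; rewrite -{1}(Rplus_0_r (F j)); apply: Rplus_le_compat_l; exact: Hp.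
Qed.

Lemma sum_delta n (F : 'I_n -> R) j :
  \big[Rplus/0]_(i < n) ((if i == j then 1 else 0) * F i) = F j.
Proof.
rewrite (bigD1 j) //= eqxx big1; first lra.
by move=> i /negPf ->; lra.
Qed.

Lemma sum_delta' n (F : 'I_n -> R) j :
  \big[Rplus/0]_(i < n) (F i * (if i == j then 1 else 0)) = F j.
Proof.
rewrite -(@sum_delta n F j); apply: sum_ext => i; lra.
Qed.

Lemma sum_swap m n (F : 'I_m -> 'I_n -> R) :
  \big[Rplus/0]_(i < m) \big[Rplus/0]_(j < n) F i j = \big[Rplus/0]_(j < n) \big[Rplus/0]_(i < m) F i j.
Proof. exact: exchange_big. Qed.

Definition n1 {n} (h : vec n) := \big[Rplus/0]_(i < n) Rabs (h i).
Definition ek {n} (j : 'I_n) : vec n := fun i => if i == j then 1 else 0.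

Lemma n1_ge0 n (h : vec n) : 0 <= n1 h.
Proof. apply: sum_ge0 => i; exact: Rabs_pos. Qed.

Lemma abs_le_n1 n (h : vec n) i : Rabs (h i) <= n1 h.
Proof. apply: (@sum_term n (fun i => Rabs (h i))) => k; exact: Rabs_pos. Qed.

Lemma n1_add n (a b : vec n) : n1 (vadd a b) <= n1 a + n1 b.
Proof.
rewrite /n1 -sum_add; apply: sum_le => i; exact: Rabs_triang.
Qed.

Lemma n1_scale n c (h : vec n) : n1 (vscale c h) = Rabs c * n1 h.
Proof. rewrite /n1 sum_scal; apply: sum_ext => i; exact: Rabs_mult. Qed.

Lemma n1_symm n (a b : vec n) : n1 (vsub a b) = n1 (vsub b a).
Proof. apply: sum_ext => i; rewrite /vsub; exact: Rabs_minus_sym. Qed.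

Lemma n1_tri n (a b c : vec n) : n1 (vsub a c) <= n1 (vsub a b) + n1 (vsub b c).
Proof.
rewrite /n1 -sum_add; apply: sum_le => i; rewrite /vsub.
have -> : a i - c i = (a i - b i) + (b i - c i) by ring.
exact: Rabs_triang.
Qed.

Lemma n1_eq0 n (h : vec n) : n1 h = 0 -> forall i, h i = 0.
Proof.
move=> H i; have := abs_le_n1 h i; have := Rabs_pos (h i); rewrite H => H1 H2.
have : Rabs (h i) = 0 by lra.
move=> H3; case: (Req_dec (h i) 0) => // Hn; exfalso; exact: (Rabs_no_R0 _ Hn).
Qed.

Lemma dot_bound n (g h : vec n) : Rabs (dot g h) <= n1 g * n1 h.
Proof.
apply: Rle_trans (sum_abs _) _; rewrite /n1 sum_scalr; apply: sum_le => i.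
rewrite Rabs_mult; apply: Rmult_le_compat_l; first exact: Rabs_pos.
exact: abs_le_n1.
Qed.

Lemma dot_bound_sup n (g h : vec n) B : (forall i, Rabs (g i) <= B) -> Rabs (dot g h) <= B * n1 h.
Proof.
move=> HB; apply: Rle_trans (sum_abs _) _; rewrite /n1 sum_scal; apply: sum_le => i.
rewrite Rabs_mult; apply: Rmult_le_compat_r; first exact: Rabs_pos. exact: HB.
Qed.

Lemma dot_add n (g a b : vec n) : dot g (vadd a b) = dot g a + dot g b.
Proof. rewrite /dot -sum_add; apply: sum_ext => i; rewrite /vadd; ring. Qed.

Lemma dot_sub n (g a b : vec n) : dot g (vsub a b) = dot g a - dot g b.
Proof. rewrite /dot -sum_sub; apply: sum_ext => i; rewrite /vsub; ring. Qed.

Lemma dot_scale n c (g h : vec n) : dot g (vscale c h) = c * dot g h.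
Proof. rewrite /dot sum_scal; apply: sum_ext => i; rewrite /vscale; ring. Qed.

Lemma dot_subl n (a b h : vec n) : dot (vsub a b) h = dot a h - dot b h.
Proof. rewrite /dot -sum_sub; apply: sum_ext => i; rewrite /vsub; ring. Qed.

Lemma dot_comm n (g h : vec n) : dot g h = dot h g.
Proof. apply: sum_ext => i; ring. Qed.

Lemma dot_ek n (g : vec n) j : dot g (ek j) = g j.
Proof. exact: sum_delta'. Qed.

Lemma n1_ek n (j : 'I_n) : n1 (ek j) = 1.
Proof.
rewrite /n1 -(@sum_delta n (fun _ => 1) j); apply: sum_ext => i; rewrite /ek.
case: (i == j); rewrite ?Rabs_R1 ?Rabs_R0; ring.
Qed.

Lemma dot_self_le n (h : vec n) : dot h h <= n1 h * n1 h.
Proof.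
rewrite /n1 sum_scalr; apply: sum_le => i.
have H2 := abs_le_n1 h i; have H1 := Rabs_pos (h i).
have H3 : h i * h i <= Rabs (h i) * Rabs (h i) by rewrite -Rabs_mult; apply: Rle_abs.
apply: Rle_trans H3 _; apply: Rmult_le_compat_l => //.
Qed.

Lemma vnorm_le_n1 n (h : vec n) : vnorm h <= n1 h.
Proof.
rewrite /vnorm -(sqrt_Rsqr (n1 h)); last exact: n1_ge0.
apply: sqrt_le_1_alt; exact: dot_self_le.
Qed.

Lemma fin_delta m (P : 'I_m -> R -> Prop) :
  (forall j d d', 0 < d' <= d -> P j d -> P j d') ->
  (forall j, exists d, 0 < d /\ P j d) -> exists d, 0 < d /\ forall j, P j d.
Proof.
move=> Hmon Hex.
suff [d [Hd Hs]] : exists d, 0 < d /\ forall j, j \in index_enum 'I_m -> P j d.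
  by exists d; split => // j; apply: Hs; exact: mem_index_enum.
elim: (index_enum 'I_m) => [|j s [ds [Hds Hs]]]; first by exists 1; split => //; lra.
have [dj [Hdj Hj]] := Hex j.
exists (Rmin dj ds); split; first exact: Rmin_pos.
move=> k; rewrite in_cons => /orP [/eqP -> | Hk].
  apply: Hmon Hj; split; [exact: Rmin_pos | exact: Rmin_l].
apply: Hmon (Hs k Hk); split; [exact: Rmin_pos | exact: Rmin_r].
Qed.

Definition sdiff n (f : vec n -> R) (g : vec n) (x : vec n) :=
  forall eps, 0 < eps -> exists del, 0 < del /\ forall a b : vec n,
    n1 (vsub a x) < del -> n1 (vsub b x) < del ->
    Rabs (f a - f b - dot g (vsub a b)) <= eps * n1 (vsub a b).

Definition lin n (y w : vec n) (t : R) : vec n := fun k => y k + t * w k.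

Lemma line_deriv n (f : vec n -> R) G : has_gradient f G -> forall y w t,
  derivable_pt_lim (fun s => f (lin y w s)) t (dot (G (lin y w t)) w).
Proof.
move=> Hg y w t eps Heps.
pose K := n1 w + 1.
have HK : 0 < K by have := n1_ge0 w; rewrite /K; lra.
have He2 : 0 < eps / (2 * K) by apply: Rdiv_lt_0_compat; lra.
have [d [Hd Hf]] := Hg (lin y w t) _ He2.
exists (mkposreal (d / K) (Rdiv_lt_0_compat _ _ Hd HK)) => h Hh0 Hh /=.
simpl in Hh.
have Ev : lin y w (t + h) = vadd (lin y w t) (vscale h w).
  apply: functional_extensionality => k; rewrite /lin /vadd /vscale; ring.
have Hn : n1 (vscale h w) = Rabs h * n1 w := n1_scale h w.
have Hw := n1_ge0 w.
have Hah : 0 < Rabs h by apply: Rabs_pos_lt.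
have Hlt : vnorm (vscale h w) < d.
  apply: Rle_lt_trans (vnorm_le_n1 _) _; rewrite Hn.
  have : Rabs h * K < d.
    have H5 := Rmult_lt_compat_r K _ _ HK Hh.
    by have <- : d / K * K = d by field; lra.
  rewrite /K; nra.
have := Hf _ Hlt; rewrite -Ev dot_scale => H.
have H2 := Rle_trans _ _ _ H (Rmult_le_compat_l _ _ _ (Rlt_le _ _ He2) (vnorm_le_n1 (vscale h w))).
rewrite Hn in H2.
set A := f (lin y w (t + h)) - f (lin y w t).
set L := dot (G (lin y w t)) w.
have -> : (f (lin y w (t + h)) - f (lin y w t)) / h - L = (A - h * L) / h by rewrite /A; field.
rewrite /Rdiv Rabs_mult Rabs_inv.
apply: (Rmult_lt_reg_r (Rabs h)) => //.
rewrite Rmult_assoc Rinv_l; last lra.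
rewrite Rmult_1_r.
apply: Rle_lt_trans; first exact: H2.
have : eps / (2 * K) * n1 w < eps.
  rewrite /Rdiv; have : n1 w / K < 1 by apply: (Rmult_lt_reg_r K) => //; field_simplify; rewrite /K; lra.
  move=> H3; have : eps * / (2 * K) * n1 w = eps * (n1 w / K) / 2 by field; lra.
  move=> ->; nra.
move=> H4; nra.
Qed.

Lemma n1_convex n (a b x : vec n) c : 0 <= c <= 1 ->
  n1 (vsub (lin b (vsub a b) c) x) <= c * n1 (vsub a x) + (1 - c) * n1 (vsub b x).
Proof.
move=> Hc.
have -> : vsub (lin b (vsub a b) c) x = vadd (vscale c (vsub a x)) (vscale (1 - c) (vsub b x)).
  apply: functional_extensionality => k; rewrite /lin /vsub /vadd /vscale; ring.
apply: Rle_trans (n1_add _ _) _; rewrite !n1_scale !Rabs_right; try lra.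
Qed.

Lemma vcont_n1 n (F : vec n -> R) x eps : vcontinuous F -> 0 < eps ->
  exists d, 0 < d /\ forall y, n1 (vsub y x) < d -> Rabs (F y - F x) < eps.
Proof.
move=> HF He; have [d [Hd H]] := HF x eps He; exists d; split => // y Hy.
apply: H; apply: Rle_lt_trans (vnorm_le_n1 _) Hy.
Qed.

Lemma C1_sdiff n (f : vec n -> R) G : is_C1 f G -> forall x, sdiff f (G x) x.
Proof.
move=> [Hg Hc] x eps He.
have [d [Hd Hd2]] : exists d, 0 < d /\ forall k, forall y, n1 (vsub y x) < d -> Rabs (G y k - G x k) < eps.
  have [d0 [Hd0 H0]] := @fin_delta n (fun k d => forall y, n1 (vsub y x) < d -> Rabs (G y k - G x k) < eps)
    ltac:(move=> k d0 d' Hdd H y Hy; apply: H; lra)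
    ltac:(move=> k; exact: vcont_n1 (Hc k) He).
  by exists d0.
exists d; split => // a b Ha Hb.
pose h := vsub a b.
pose phi := fun s => f (lin b h s) - dot (G x) h * s.
have Hder : forall c, 0 <= c <= 1 -> derivable_pt_lim phi c (dot (G (lin b h c)) h - dot (G x) h * 1).
  move=> c _; apply: derivable_pt_lim_minus; first exact: line_deriv.
  apply: derivable_pt_lim_scal; exact: derivable_pt_lim_id.
have [c [Hmvt Hc01]] := MVT_cor2 phi _ 0 1 Rlt_0_1 Hder.
have E1 : lin b h 1 = a by apply: functional_extensionality => k; rewrite /lin /h /vsub; ring.
have E0 : lin b h 0 = b by apply: functional_extensionality => k; rewrite /lin /h /vsub; ring.
have -> : f a - f b - dot (G x) (vsub a b) = phi 1 - phi 0 by rewrite /phi E1 E0 /h; ring.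
rewrite Hmvt.
have -> : (dot (G (lin b h c)) h - dot (G x) h * 1) * (1 - 0) = dot (vsub (G (lin b h c)) (G x)) h.
  by rewrite dot_subl; ring.
apply: dot_bound_sup => k; rewrite /vsub; apply: Rlt_le; apply: Hd2.
apply: Rle_lt_trans (n1_convex a b x (conj (Rlt_le _ _ (proj1 Hc01)) (Rlt_le _ _ (proj2 Hc01)))) _.
nra.
Qed.

Lemma dot_addl n (a b h : vec n) : dot (vadd a b) h = dot a h + dot b h.
Proof. rewrite /dot -sum_add; apply: sum_ext => i; rewrite /vadd; ring. Qed.

Lemma dot_scalel n c (a h : vec n) : dot (vscale c a) h = c * dot a h.
Proof. rewrite /dot sum_scal; apply: sum_ext => i; rewrite /vscale; ring. Qed.

Lemma vsub_self n (x : vec n) : n1 (vsub x x) = 0.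
Proof. rewrite /n1; apply: sum_zero => i; rewrite /vsub Rminus_diag Rabs_R0 //. Qed.

Lemma sdiff_lip n (f : vec n -> R) g x : sdiff f g x ->
  exists d, 0 < d /\ forall a b, n1 (vsub a x) < d -> n1 (vsub b x) < d ->
    Rabs (f a - f b) <= (n1 g + 1) * n1 (vsub a b).
Proof.
move=> H; have [d [Hd Hf]] := H 1 Rlt_0_1; exists d; split => // a b Ha Hb.
have := Hf a b Ha Hb; have := dot_bound g (vsub a b).
have := Rabs_triang (f a - f b - dot g (vsub a b)) (dot g (vsub a b)).
have -> : f a - f b - dot g (vsub a b) + dot g (vsub a b) = f a - f b by ring.
lra.
Qed.

Lemma sdiff_cont n (f : vec n -> R) g x eta : sdiff f g x -> 0 < eta ->
  exists d, 0 < d /\ forall a, n1 (vsub a x) < d -> Rabs (f a - f x) <= eta.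
Proof.
move=> H He; have [d [Hd Hf]] := sdiff_lip H.
have HK : 0 < n1 g + 1 by have := n1_ge0 g; lra.
exists (Rmin d (eta / (n1 g + 1))); split.
  apply: Rmin_pos => //; exact: Rdiv_lt_0_compat.
move=> a Ha.
have Ha1 : n1 (vsub a x) < d by apply: Rlt_le_trans Ha (Rmin_l _ _).
have Ha2 : n1 (vsub a x) < eta / (n1 g + 1) by apply: Rlt_le_trans Ha (Rmin_r _ _).
have Hx : n1 (vsub x x) < d by rewrite vsub_self.
apply: Rle_trans (Hf a x Ha1 Hx) _.
have : (n1 g + 1) * n1 (vsub a x) <= (n1 g + 1) * (eta / (n1 g + 1)).
  apply: Rmult_le_compat_l; lra.
have -> : (n1 g + 1) * (eta / (n1 g + 1)) = eta by field; lra.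
done.
Qed.

Lemma sdiff_ext n (f f' : vec n -> R) g g' x :
  (forall a, f a = f' a) -> (forall k, g k = g' k) -> sdiff f g x -> sdiff f' g' x.
Proof.
move=> Hf Hg H eps He; have [d [Hd H1]] := H eps He; exists d; split => // a b Ha Hb.
rewrite -!Hf; have -> : dot g' (vsub a b) = dot g (vsub a b).
  by apply: sum_ext => i; rewrite Hg.
exact: H1.
Qed.

Lemma sdiff_dot n (w : vec n) x : sdiff (fun a => dot w a) w x.
Proof.
move=> eps He; exists 1; split; first lra; move=> a b _ _.
rewrite dot_sub; have -> : dot w a - dot w b - (dot w a - dot w b) = 0 by ring.
rewrite Rabs_R0; have := n1_ge0 (vsub a b); nra.
Qed.

Lemma sdiff_const n (c : R) x : sdiff (fun _ : vec n => c) vzero x.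
Proof.
move=> eps He; exists 1; split; first lra; move=> a b _ _.
have -> : dot vzero (vsub a b) = 0 by rewrite /dot sum_zero // => i; rewrite /vzero; ring.
have -> : c - c - 0 = 0 by ring.
rewrite Rabs_R0; have := n1_ge0 (vsub a b); nra.
Qed.

Lemma sdiff_coord n (j : 'I_n) x : sdiff (fun a => a j) (ek j) x.
Proof.
apply: (@sdiff_ext n (fun a => dot (ek j) a)) (sdiff_dot _ _) => // a.
by rewrite dot_comm dot_ek.
Qed.

Lemma sdiff_add n (f u : vec n -> R) g q x : sdiff f g x -> sdiff u q x ->
  sdiff (fun a => f a + u a) (vadd g q) x.
Proof.
move=> Hf Hu eps He.
have [d1 [Hd1 H1]] := Hf (eps / 2) ltac:(lra).
have [d2 [Hd2 H2]] := Hu (eps / 2) ltac:(lra).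
exists (Rmin d1 d2); split; first exact: Rmin_pos.
move=> a b Ha Hb.
have Ha1 := Rlt_le_trans _ _ _ Ha (Rmin_l d1 d2).
have Ha2 := Rlt_le_trans _ _ _ Ha (Rmin_r d1 d2).
have Hb1 := Rlt_le_trans _ _ _ Hb (Rmin_l d1 d2).
have Hb2 := Rlt_le_trans _ _ _ Hb (Rmin_r d1 d2).
have := H1 a b Ha1 Hb1; have := H2 a b Ha2 Hb2; rewrite dot_addl.
have := Rabs_triang (f a - f b - dot g (vsub a b)) (u a - u b - dot q (vsub a b)).
have -> : f a - f b - dot g (vsub a b) + (u a - u b - dot q (vsub a b)) =
  f a + u a - (f b + u b) - (dot g (vsub a b) + dot q (vsub a b)) by ring.
lra.
Qed.

Lemma sdiff_scal n (f : vec n -> R) g x (r : R) : sdiff f g x ->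
  sdiff (fun a => r * f a) (vscale r g) x.
Proof.
move=> Hf eps He.
have [d [Hd H1]] := Hf (eps / (Rabs r + 1)) ltac:(apply: Rdiv_lt_0_compat; have := Rabs_pos r; lra).
exists d; split => // a b Ha Hb.
rewrite dot_scalel.
have -> : r * f a - r * f b - r * dot g (vsub a b) = r * (f a - f b - dot g (vsub a b)) by ring.
rewrite Rabs_mult.
have Hr := Rabs_pos r.
apply: Rle_trans (Rmult_le_compat_l _ _ _ Hr (H1 a b Ha Hb)) _.
have Hn := n1_ge0 (vsub a b).
have -> : Rabs r * (eps / (Rabs r + 1) * n1 (vsub a b)) = (Rabs r / (Rabs r + 1)) * eps * n1 (vsub a b) by field; lra.
have : Rabs r / (Rabs r + 1) <= 1.
  apply: (Rmult_le_reg_r (Rabs r + 1)); first lra.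
  have -> : Rabs r / (Rabs r + 1) * (Rabs r + 1) = Rabs r by field; lra.
  lra.
move=> H; apply: Rmult_le_compat_r => //; nra.
Qed.

Lemma Rmin4_pos a b c d : 0 < a -> 0 < b -> 0 < c -> 0 < d -> 0 < Rmin (Rmin a b) (Rmin c d).
Proof. move=> *; repeat apply: Rmin_pos => //. Qed.

Lemma Rmin4_le a b c d x : x < Rmin (Rmin a b) (Rmin c d) -> x < a /\ x < b /\ x < c /\ x < d.
Proof.
move=> H; have H1 := Rmin_l (Rmin a b) (Rmin c d); have H2 := Rmin_r (Rmin a b) (Rmin c d).
have := Rmin_l a b; have := Rmin_r a b; have := Rmin_l c d; have := Rmin_r c d; lra.
Qed.

Lemma sdiff_mul n (f u : vec n -> R) g q x : sdiff f g x -> sdiff u q x ->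
  sdiff (fun a => f a * u a) (fun k => f x * q k + u x * g k) x.
Proof.
move=> Hf Hu eps He.
pose K := Rabs (f x) + Rabs (u x) + 2 + n1 q + n1 g.
have HK : 0 < K by have := n1_ge0 q; have := n1_ge0 g; have := Rabs_pos (f x); have := Rabs_pos (u x); rewrite /K; lra.
pose eta := Rmin 1 (eps / K).
have Heta : 0 < eta by apply: Rmin_pos; [lra | exact: Rdiv_lt_0_compat].
have Heta1 : eta <= 1 by exact: Rmin_l.
have HetaK : eta * K <= eps.
  have : eta <= eps / K by exact: Rmin_r.
  move=> H; have := Rmult_le_compat_r K _ _ (Rlt_le _ _ HK) H.
  by have -> : eps / K * K = eps by field; lra.
have [d1 [Hd1 H1]] := Hf eta Heta.
have [d2 [Hd2 H2]] := Hu eta Heta.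
have [d3 [Hd3 H3]] := sdiff_cont Hf Heta.
have [d4 [Hd4 H4]] := sdiff_cont Hu Heta.
exists (Rmin (Rmin d1 d2) (Rmin d3 d4)); split; first exact: Rmin4_pos.
move=> a b /Rmin4_le [Ha1 [Ha2 [Ha3 Ha4]]] /Rmin4_le [Hb1 [Hb2 [Hb3 Hb4]]].
set h := vsub a b.
have E : f a * u a - f b * u b - dot (fun k => f x * q k + u x * g k) h =
   f a * (u a - u b - dot q h) + (f a - f x) * dot q h
   + u b * (f a - f b - dot g h) + (u b - u x) * dot g h.
  have -> : dot (fun k => f x * q k + u x * g k) h = f x * dot q h + u x * dot g h.
    rewrite /dot !sum_scal -sum_add; apply: sum_ext => i; ring.
  ring.
rewrite E.
have Ef := H3 a Ha3; have Eu := H4 b Hb4.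
have Ea := H2 a b Ha2 Hb2; have Eb := H1 a b Ha1 Hb1.
have Dq := dot_bound q h; have Dg := dot_bound g h.
have Hn := n1_ge0 h; have Hnq := n1_ge0 q; have Hng := n1_ge0 g.
have Hfa : Rabs (f a) <= Rabs (f x) + 1.
  have := Rabs_triang (f a - f x) (f x); have -> : f a - f x + f x = f a by ring. lra.
have Hub : Rabs (u b) <= Rabs (u x) + 1.
  have := Rabs_triang (u b - u x) (u x); have -> : u b - u x + u x = u b by ring. lra.
set A1 := u a - u b - dot q h.
set A2 := f a - f b - dot g h.
have T1 : Rabs (f a * A1) <= (Rabs (f x) + 1) * (eta * n1 h).
  rewrite Rabs_mult; apply: Rmult_le_compat => //; exact: Rabs_pos.
have T2 : Rabs ((f a - f x) * dot q h) <= eta * (n1 q * n1 h).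
  rewrite Rabs_mult; apply: Rmult_le_compat => //; exact: Rabs_pos.
have T3 : Rabs (u b * A2) <= (Rabs (u x) + 1) * (eta * n1 h).
  rewrite Rabs_mult; apply: Rmult_le_compat => //; exact: Rabs_pos.
have T4 : Rabs ((u b - u x) * dot g h) <= eta * (n1 g * n1 h).
  rewrite Rabs_mult; apply: Rmult_le_compat => //; exact: Rabs_pos.
have S := Rabs_triang (f a * A1 + (f a - f x) * dot q h + u b * A2) ((u b - u x) * dot g h).
have S2 := Rabs_triang (f a * A1 + (f a - f x) * dot q h) (u b * A2).
have S3 := Rabs_triang (f a * A1) ((f a - f x) * dot q h).
have : eta * K * n1 h <= eps * n1 h by apply: Rmult_le_compat_r.
rewrite /K => HH.
nra.
Qed.

Lemma sdiff_chain n m (Phi : 'I_m -> vec n -> R) (M : 'I_m -> vec n) (f : vec m -> R) g x :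
  (forall j, sdiff (Phi j) (M j) x) -> sdiff f g (fun j => Phi j x) ->
  sdiff (fun a => f (fun j => Phi j a)) (fun k => \big[Rplus/0]_(j < m) (g j * M j k)) x.
Proof.
move=> HP Hf eps He.
pose K := \big[Rplus/0]_(j < m) (n1 (M j) + 1).
have HK0 : 0 <= K by apply: sum_ge0 => j; have := n1_ge0 (M j); lra.
have [dL [HdL HL]] := @fin_delta m (fun j d => forall a b, n1 (vsub a x) < d -> n1 (vsub b x) < d ->
    Rabs (Phi j a - Phi j b) <= (n1 (M j) + 1) * n1 (vsub a b))
  ltac:(move=> j d d' Hdd H a b Ha Hb; apply: H; lra)
  ltac:(move=> j; exact: sdiff_lip (HP j)).
have Hyl : forall a b, n1 (vsub a x) < dL -> n1 (vsub b x) < dL ->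
    n1 (vsub (fun j => Phi j a) (fun j => Phi j b)) <= K * n1 (vsub a b).
  move=> a b Ha Hb; rewrite /K sum_scalr; apply: sum_le => j; exact: HL.
pose e1 := eps / (2 * (K + 1)).
have He1 : 0 < e1 by apply: Rdiv_lt_0_compat; lra.
pose e2 := eps / (2 * (n1 g + 1)).
have He2 : 0 < e2 by apply: Rdiv_lt_0_compat; have := n1_ge0 g; lra.
have [df [Hdf Hff]] := Hf e1 He1.
have [d2 [Hd2 H2]] := @fin_delta m (fun j d => forall a b, n1 (vsub a x) < d -> n1 (vsub b x) < d ->
    Rabs (Phi j a - Phi j b - dot (M j) (vsub a b)) <= e2 * n1 (vsub a b))
  ltac:(move=> j d d' Hdd H a b Ha Hb; apply: H; lra)
  ltac:(move=> j; exact: (HP j) e2 He2).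
pose d3 := df / (K + 1).
have Hd3 : 0 < d3 by apply: Rdiv_lt_0_compat; lra.
exists (Rmin (Rmin dL d2) (Rmin d3 d3)); split; first exact: Rmin4_pos.
have Hin : forall a, n1 (vsub a x) < d3 -> n1 (vsub a x) < dL ->
    n1 (vsub (fun j => Phi j a) (fun j => Phi j x)) < df.
  move=> a Ha Ha'; have Hx : n1 (vsub x x) < dL by rewrite vsub_self.
  apply: Rle_lt_trans (Hyl a x Ha' Hx) _.
  have : (K + 1) * n1 (vsub a x) < df.
    have := Rmult_lt_compat_l (K + 1) _ _ ltac:(lra) Ha.
    by have -> : (K + 1) * d3 = df by rewrite /d3; field; lra.
  have := n1_ge0 (vsub a x); nra.
move=> a b /Rmin4_le [Ha1 [Ha2 [Ha3 _]]] /Rmin4_le [Hb1 [Hb2 [Hb3 _]]].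
set h := vsub a b.
set ya := fun j => Phi j a.
set yb := fun j => Phi j b.
have Edot : dot (fun k => \big[Rplus/0]_(j < m) (g j * M j k)) h =
    \big[Rplus/0]_(j < m) (g j * dot (M j) h).
  rewrite /dot; under eq_bigr do rewrite sum_scalr.
  rewrite sum_swap; apply: sum_ext => j; rewrite sum_scal; apply: sum_ext => k; ring.
have Edot2 : dot g (vsub ya yb) = \big[Rplus/0]_(j < m) (g j * (Phi j a - Phi j b)).
  by [].
have E : f ya - f yb - dot (fun k => \big[Rplus/0]_(j < m) (g j * M j k)) h =
   (f ya - f yb - dot g (vsub ya yb)) + \big[Rplus/0]_(j < m) (g j * (Phi j a - Phi j b - dot (M j) h)).
  rewrite Edot Edot2.
  have -> : \big[Rplus/0]_(j < m) (g j * (Phi j a - Phi j b - dot (M j) h)) =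
     \big[Rplus/0]_(j < m) (g j * (Phi j a - Phi j b)) - \big[Rplus/0]_(j < m) (g j * dot (M j) h).
    rewrite -sum_sub; apply: sum_ext => j; ring.
  ring.
rewrite E.
have B1 := Hff ya yb (Hin a Ha3 Ha1) (Hin b Hb3 Hb1).
have B2 := Hyl a b Ha1 Hb1.
have B3 : Rabs (\big[Rplus/0]_(j < m) (g j * (Phi j a - Phi j b - dot (M j) h))) <= n1 g * (e2 * n1 h).
  apply: Rle_trans (sum_abs _) _; rewrite /n1 sum_scalr; apply: sum_le => j.
  rewrite Rabs_mult; apply: Rmult_le_compat_l; first exact: Rabs_pos.
  exact: H2.
have S := Rabs_triang (f ya - f yb - dot g (vsub ya yb)) (\big[Rplus/0]_(j < m) (g j * (Phi j a - Phi j b - dot (M j) h))).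
have Hn := n1_ge0 h.
have C1 : e1 * (K * n1 h) <= eps / 2 * n1 h.
  have -> : e1 * (K * n1 h) = (eps / 2) * (K / (K + 1)) * n1 h by rewrite /e1; field; lra.
  have : K / (K + 1) <= 1.
    apply: (Rmult_le_reg_r (K + 1)); first lra.
    have -> : K / (K + 1) * (K + 1) = K by field; lra. lra.
  move=> HH; apply: Rmult_le_compat_r => //; nra.
have C2 : n1 g * (e2 * n1 h) <= eps / 2 * n1 h.
  have Hg := n1_ge0 g.
  have -> : n1 g * (e2 * n1 h) = (eps / 2) * (n1 g / (n1 g + 1)) * n1 h by rewrite /e2; field; lra.
  have : n1 g / (n1 g + 1) <= 1.
    apply: (Rmult_le_reg_r (n1 g + 1)); first lra.
    have -> : n1 g / (n1 g + 1) * (n1 g + 1) = n1 g by field; lra. lra.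
  move=> HH; apply: Rmult_le_compat_r => //; nra.
have B1' : e1 * n1 (vsub ya yb) <= e1 * (K * n1 h) by apply: Rmult_le_compat_l; [lra | exact: B2].
lra.
Qed.

Lemma sdiff_sum n m (F : 'I_m -> vec n -> R) (G : 'I_m -> vec n) x :
  (forall j, sdiff (F j) (G j) x) ->
  sdiff (fun a => \big[Rplus/0]_(j < m) F j a) (fun k => \big[Rplus/0]_(j < m) G j k) x.
Proof.
move=> H.
have := @sdiff_chain n m F G (fun y => dot (fun _ => 1) y) (fun _ => 1) x H (sdiff_dot _ _).
apply: sdiff_ext => [a | k]; apply: sum_ext => j; ring.
Qed.

Lemma sdiff_sub n (f u : vec n -> R) g q x : sdiff f g x -> sdiff u q x ->
  sdiff (fun a => f a - u a) (vsub g q) x.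
Proof.
move=> Hf Hu; have := sdiff_add Hf (sdiff_scal (-1) Hu).
apply: sdiff_ext => [a | k]; rewrite /vadd /vscale /vsub; ring.
Qed.

Lemma mvt_line n (f : vec n -> R) G : has_gradient f G -> forall y w a b, a < b ->
  exists c, a < c < b /\ f (lin y w b) - f (lin y w a) = dot (G (lin y w c)) w * (b - a).
Proof.
move=> Hg y w a b Hab.
have [c [H1 H2]] := MVT_cor2 (fun s => f (lin y w s)) (fun s => dot (G (lin y w s)) w) a b Hab
  (fun c _ => line_deriv Hg y w c).
by exists c; split.
Qed.

Lemma lin0 n (y w : vec n) : lin y w 0 = y.
Proof. apply: functional_extensionality => k; rewrite /lin; ring. Qed.

Lemma mvt_line2 n (f : vec n -> R) G : has_gradient f G -> forall y1 y0 w b, 0 < b ->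
  exists c, 0 < c < b /\
   (f (lin y1 w b) - f (lin y0 w b)) - (f y1 - f y0) =
     (dot (G (lin y1 w c)) w - dot (G (lin y0 w c)) w) * b.
Proof.
move=> Hg y1 y0 w b Hb.
have [c [H1 H2]] := MVT_cor2 (fun s => f (lin y1 w s) - f (lin y0 w s))
  (fun s => dot (G (lin y1 w s)) w - dot (G (lin y0 w s)) w) 0 b Hb
  (fun c _ => derivable_pt_lim_minus _ _ _ _ _ (line_deriv Hg y1 w c) (line_deriv Hg y0 w c)).
exists c; split => //; rewrite !lin0 in H1; rewrite H1; ring.
Qed.

Lemma n1_two n (i j : 'I_n) a b : n1 (vadd (vscale a (ek i)) (vscale b (ek j))) <= Rabs a + Rabs b.
Proof. apply: Rle_trans (n1_add _ _) _; rewrite !n1_scale !n1_ek; lra. Qed.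

Lemma schwarz_side n (f : vec n -> R) G H x i j e : has_gradient f G ->
  sdiff (fun y => G y i) (fun k => H x i k) x -> 0 < e -> exists d, 0 < d /\ forall s, 0 < s -> 2 * s < d ->
  Rabs ((f (lin (lin x (ek j) s) (ek i) s) - f (lin x (ek i) s)) - (f (lin x (ek j) s) - f x)
         - s * s * H x i j) <= e * s * s.
Proof.
move=> Hg Si He; have [d [Hd Hi]] := Si e He; exists d; split => // s Hs Hsd.
have [c [Hc E]] := mvt_line2 Hg (lin x (ek j) s) x (ek i) Hs.
rewrite E !dot_ek.
set p1 := lin (lin x (ek j) s) (ek i) c.
set p0 := lin x (ek i) c.
have D10 : vsub p1 p0 = vscale s (ek j)
  by apply: functional_extensionality => k; rewrite /p1 /p0 /lin /vsub /vscale; ring.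
have D1 : vsub p1 x = vadd (vscale c (ek i)) (vscale s (ek j))
  by apply: functional_extensionality => k; rewrite /p1 /lin /vsub /vscale /vadd; ring.
have D0 : vsub p0 x = vscale c (ek i)
  by apply: functional_extensionality => k; rewrite /p0 /lin /vsub /vscale; ring.
have N1 : n1 (vsub p1 x) < d.
  rewrite D1; apply: Rle_lt_trans (n1_two _ _ _ _) _; rewrite !Rabs_right; lra.
have N0 : n1 (vsub p0 x) < d by rewrite D0 n1_scale n1_ek Rabs_right; lra.
have := Hi p1 p0 N1 N0; rewrite D10 dot_scale dot_ek n1_scale n1_ek (Rabs_right s); last lra.
move=> HH.
have -> : (G p1 i - G p0 i) * s - s * s * H x i j = s * (G p1 i - G p0 i - s * H x i j) by ring.
rewrite Rabs_mult Rabs_right; last lra.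
have := Rmult_le_compat_l s _ _ (Rlt_le _ _ Hs) HH; lra.
Qed.

Lemma schwarz n (f : vec n -> R) G H : is_C2 f G H -> forall x i j, H x i j = H x j i.
Proof.
move=> [[Hg _] HC] x i j.
have Si := C1_sdiff (HC i) x.
have Sj := C1_sdiff (HC j) x.
apply: NNPP => Hne.
set e := Rabs (H x i j - H x j i) / 4.
have He : 0 < e by rewrite /e; apply: Rdiv_lt_0_compat; [apply: Rabs_pos_lt; lra | lra].
have [d1 [Hd1 H1]] := schwarz_side j Hg Si He.
have [d2 [Hd2 H2]] := schwarz_side i Hg Sj He.
set s := Rmin d1 d2 / 3.
have Hs : 0 < s by rewrite /s; apply: Rdiv_lt_0_compat; [exact: Rmin_pos | lra].
have Hs1 : 2 * s < d1 by have := Rmin_l d1 d2; rewrite /s; lra.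
have Hs2 : 2 * s < d2 by have := Rmin_r d1 d2; rewrite /s; lra.
have A1 := H1 s Hs Hs1; have A2 := H2 s Hs Hs2.
have Esw : lin (lin x (ek j) s) (ek i) s = lin (lin x (ek i) s) (ek j) s
  by apply: functional_extensionality => k; rewrite /lin; ring.
rewrite Esw in A1.
set X := f (lin (lin x (ek i) s) (ek j) s) in A1 A2.
have : Rabs (s * s * H x i j - s * s * H x j i) <= 2 * e * s * s.
  have := Rabs_triang ((X - f (lin x (ek j) s)) - (f (lin x (ek i) s) - f x) - s * s * H x j i)
     (- ((X - f (lin x (ek i) s)) - (f (lin x (ek j) s) - f x) - s * s * H x i j)).
  rewrite Rabs_Ropp.
  have -> : (X - f (lin x (ek j) s)) - (f (lin x (ek i) s) - f x) - s * s * H x j i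
     + - ((X - f (lin x (ek i) s)) - (f (lin x (ek j) s) - f x) - s * s * H x i j)
     = s * s * H x i j - s * s * H x j i by ring.
  lra.
have -> : s * s * H x i j - s * s * H x j i = (s * s) * (H x i j - H x j i) by ring.
rewrite Rabs_mult (Rabs_right (s * s)); last nra.
rewrite /e => HH.
have Hss : 0 < s * s by nra.
have Hp : 0 < Rabs (H x i j - H x j i) by apply: Rabs_pos_lt; lra.
nra.
Qed.

Definition Pw n m (P : 'I_m -> vec n) (w : vec m) : vec n :=
  fun k => \big[Rplus/0]_(l < m) (w l * P l k).

Lemma Pw_sub n m (P : 'I_m -> vec n) a b : vsub (Pw P a) (Pw P b) = Pw P (vsub a b).
Proof.
apply: functional_extensionality => k; rewrite /vsub /Pw -sum_sub; apply: sum_ext => l; ring.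
Qed.

Lemma Pw_bound n m (P : 'I_m -> vec n) w :
  n1 (Pw P w) <= n1 w * \big[Rplus/0]_(l < m) n1 (P l).
Proof.
rewrite sum_scal.
apply: Rle_trans (_ : \big[Rplus/0]_(k < n) \big[Rplus/0]_(l < m) Rabs (w l * P l k) <= _).
  apply: sum_le => k; exact: sum_abs.
rewrite sum_swap; apply: sum_le => l; rewrite /n1 sum_scal; apply: sum_le => k.
rewrite Rabs_mult; apply: Rmult_le_compat_r; first exact: Rabs_pos.
exact: abs_le_n1.
Qed.

Lemma JPw n m (J P : 'I_m -> vec n) w i :
  (forall i l, dot (J i) (P l) = if i == l then 1 else 0) -> dot (J i) (Pw P w) = w i.
Proof.
move=> HJP; rewrite /dot /Pw.
under eq_bigr do rewrite sum_scal.
rewrite sum_swap -(@sum_delta' m w i).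
apply: sum_ext => l; rewrite eq_sym -HJP /dot sum_scal; apply: sum_ext => k; ring.
Qed.

Lemma Pw0 n m (P : 'I_m -> vec n) : Pw P vzero = vzero.
Proof.
apply: functional_extensionality => k; rewrite /Pw sum_zero // => l; rewrite /vzero; ring.
Qed.

Lemma lim_le u l c B N : Un_cv u l -> (forall p, (N <= p)%nat -> Rabs (u p - c) <= B) ->
  Rabs (l - c) <= B.
Proof.
move=> Hu Hb; apply: Rnot_lt_le => Hlt.
have [p0 Hp0] := Hu (Rabs (l - c) - B) ltac:(lra).
pose p := maxn p0 N.
have H1 := Hp0 p ltac:(apply/leP; exact: leq_maxl).
have H2 := Hb p (leq_maxr _ _).
rewrite /R_dist in H1.
have := Rabs_triang (l - u p) (u p - c).
have -> : l - u p + (u p - c) = l - c by ring.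
rewrite -Rabs_Ropp (_ : - (u p - l) = l - u p) in H1; last ring.
lra.
Qed.

Lemma lim_pow X Y C : 0 <= C -> (forall k, X <= Y + C * (/ 2) ^ k) -> X <= Y.
Proof.
move=> HC H; apply: Rnot_lt_le => Hlt.
have [N HN] := pow_lt_1_zero (/ 2) ltac:(rewrite Rabs_right; lra) ((X - Y) / (C + 1))
  ltac:(apply: Rdiv_lt_0_compat; lra).
have := HN N (le_n N); have := H N.
have Hp : 0 <= (/ 2) ^ N by apply: pow_le; lra.
rewrite Rabs_right; last lra.
move=> H1 H2.
have : C * (/ 2) ^ N <= (C + 1) * (/ 2) ^ N by nra.
have : (C + 1) * (/ 2) ^ N < (C + 1) * ((X - Y) / (C + 1)) by apply: Rmult_lt_compat_l; lra.
have -> : (C + 1) * ((X - Y) / (C + 1)) = X - Y by field; lra.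
lra.
Qed.

Lemma pow_half_pos k : 0 < (/ 2) ^ k.
Proof. apply: pow_lt; lra. Qed.

Lemma pow_half_S k : (/ 2) ^ k.+1 = / 2 * (/ 2) ^ k.
Proof. done. Qed.

Definition pt n m (x v : vec n) (P : 'I_m -> vec n) s w : vec n :=
  fun k => x k + s * v k + Pw P w k.

Lemma n1_le_tri n (a b : vec n) : n1 a <= n1 b + n1 (vsub a b).
Proof.
have := n1_tri a b vzero.
have E : forall c : vec n, vsub c vzero = c.
  by move=> c; apply: functional_extensionality => k; rewrite /vsub /vzero; ring.
rewrite !E; lra.
Qed.

Lemma feas n m (F : 'I_m -> vec n -> R) (J P : 'I_m -> vec n) (x v : vec n) :
  (forall i, sdiff (F i) (J i) x) -> (forall i, F i x = 0) ->
  (forall i l, dot (J i) (P l) = if i == l then 1 else 0) ->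
  (forall i, dot (J i) v = 0) ->
  forall eta, 0 < eta -> exists s0, 0 < s0 /\ forall s, 0 < s < s0 ->
    exists w, (forall i, F i (pt x v P s w) = 0) /\ n1 w <= eta * s.
Proof.
move=> HF HF0 HJP HJv eta Heta.
pose CP := \big[Rplus/0]_(l < m) n1 (P l).
pose mm := \big[Rplus/0]_(i < m) 1.
have HCP : 0 <= CP by apply: sum_ge0 => l; exact: n1_ge0.
have Hmm : 0 <= mm by apply: sum_ge0 => l; lra.
have Hv := n1_ge0 v.
pose eps := Rmin (/ (2 * (mm * CP + 1))) (eta / (2 * (mm * n1 v + 1))).
have Heps : 0 < eps.
  apply: Rmin_pos; [apply: Rinv_0_lt_compat | apply: Rdiv_lt_0_compat]; nra.
have E1 : mm * eps * CP <= / 2.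
  have H1 : eps <= / (2 * (mm * CP + 1)) by exact: Rmin_l.
  have H2 : mm * CP * eps <= mm * CP * / (2 * (mm * CP + 1)) by apply: Rmult_le_compat_l; nra.
  have H3 : mm * CP * / (2 * (mm * CP + 1)) <= / 2.
    have -> : mm * CP * / (2 * (mm * CP + 1)) = / 2 * (mm * CP / (mm * CP + 1)) by field; nra.
    have : mm * CP / (mm * CP + 1) <= 1.
      apply: (Rmult_le_reg_r (mm * CP + 1)); first nra.
      have -> : mm * CP / (mm * CP + 1) * (mm * CP + 1) = mm * CP by field; nra. nra.
    lra.
  nra.
have E2 : mm * eps * n1 v <= eta / 2.
  have H1 : eps <= eta / (2 * (mm * n1 v + 1)) by exact: Rmin_r.
  have H2 : mm * n1 v * eps <= mm * n1 v * (eta / (2 * (mm * n1 v + 1))) by apply: Rmult_le_compat_l; nra.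
  have H3 : mm * n1 v * (eta / (2 * (mm * n1 v + 1))) <= eta / 2.
    have -> : mm * n1 v * (eta / (2 * (mm * n1 v + 1))) = eta / 2 * (mm * n1 v / (mm * n1 v + 1)) by field; nra.
    have : mm * n1 v / (mm * n1 v + 1) <= 1.
      apply: (Rmult_le_reg_r (mm * n1 v + 1)); first nra.
      have -> : mm * n1 v / (mm * n1 v + 1) * (mm * n1 v + 1) = mm * n1 v by field; nra. nra.
    nra.
  nra.
have [d [Hd HFd]] := @fin_delta m (fun i d => forall a b, n1 (vsub a x) < d -> n1 (vsub b x) < d ->
    Rabs (F i a - F i b - dot (J i) (vsub a b)) <= eps * n1 (vsub a b))
  ltac:(move=> i d0 d' Hdd H a b Ha Hb; apply: H; lra)
  (fun i => HF i eps Heps).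
have HK : 0 < n1 v + CP * eta + 1 by nra.
exists (d / (n1 v + CP * eta + 1)); split; first exact: Rdiv_lt_0_compat.
move=> s [Hs Hs0].
pose r := eta * s.
have Hr : 0 < r by rewrite /r; nra.
pose T := fun w : vec m => (fun i => w i - F i (pt x v P s w)) : vec m.
have Hptx : forall w, vsub (pt x v P s w) x = vadd (vscale s v) (Pw P w).
  by move=> w; apply: functional_extensionality => k; rewrite /pt /vsub /vadd /vscale; ring.
have Hptd : forall a b, vsub (pt x v P s a) (pt x v P s b) = Pw P (vsub a b).
  move=> a b; rewrite -Pw_sub; apply: functional_extensionality => k; rewrite /pt /vsub; ring.
have Hball : forall w, n1 w <= r -> n1 (vsub (pt x v P s w) x) < d.
  move=> w Hw; rewrite Hptx; apply: Rle_lt_trans (n1_add _ _) _.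
  rewrite n1_scale Rabs_right; last lra.
  have := Pw_bound P w; rewrite -/CP => HB.
  have : n1 w * CP <= r * CP by apply: Rmult_le_compat_r.
  have : s * (n1 v + CP * eta + 1) < d.
    have := Rmult_lt_compat_r (n1 v + CP * eta + 1) _ _ HK Hs0.
    by have -> : d / (n1 v + CP * eta + 1) * (n1 v + CP * eta + 1) = d by field; lra.
  rewrite /r; nra.
have Hcon : forall a b, n1 a <= r -> n1 b <= r -> n1 (vsub (T a) (T b)) <= / 2 * n1 (vsub a b).
  move=> a b Ha Hb.
  apply: Rle_trans (_ : n1 (vsub (T a) (T b)) <= mm * (eps * (CP * n1 (vsub a b)))) _; last first.
    have := n1_ge0 (vsub a b); nra.
  rewrite /mm sum_scalr; apply: sum_le => i; rewrite Rmult_1_l.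
  have -> : vsub (T a) (T b) i = - (F i (pt x v P s a) - F i (pt x v P s b)
              - dot (J i) (vsub (pt x v P s a) (pt x v P s b))).
    rewrite Hptd JPw //; rewrite /vsub /T; ring.
  rewrite Rabs_Ropp; apply: Rle_trans (HFd i _ _ (Hball a Ha) (Hball b Hb)) _.
  rewrite Hptd; apply: Rmult_le_compat_l; first lra.
  have := Pw_bound P (vsub a b); rewrite -/CP; lra.
have HT0 : n1 (T vzero) <= r / 2.
  apply: Rle_trans (_ : n1 (T vzero) <= mm * (eps * (s * n1 v))) _; last first.
    rewrite /r; nra.
  rewrite /mm sum_scalr; apply: sum_le => i; rewrite Rmult_1_l.
  have Hx0 : vsub (pt x v P s vzero) x = vscale s v by rewrite Hptx Pw0; apply: functional_extensionality => k; rewrite /vadd /vscale /vzero; ring.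
  have Hxx : n1 (vsub x x) < d by rewrite vsub_self.
  have := HFd i _ _ (Hball vzero ltac:(rewrite /n1 sum_zero; [lra | move=> k; rewrite /vzero Rabs_R0 //])) Hxx.
  rewrite Hx0 HF0 dot_scale HJv n1_scale (Rabs_right s); last lra.
  have -> : T vzero i = - (F i (pt x v P s vzero) - 0 - s * 0) by rewrite /T /vzero; ring.
  by rewrite Rabs_Ropp.
pose w := fun k => iter k T vzero.
have n1z : n1 (@vzero m) = 0 by rewrite /n1 sum_zero // => k; rewrite /vzero Rabs_R0.
have Q : forall k, n1 (w k) <= r * (1 - (/2)^k) /\ n1 (vsub (w k.+1) (w k)) <= r * (/2)^(k.+1).
  elim => [|k [IH1 IH2]].
    rewrite /w /= n1z; split; first lra.
    have -> : vsub (T vzero) vzero = T vzero by apply: functional_extensionality => i; rewrite /vsub /vzero; ring.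
    lra.
  have Hp := pow_half_pos k.
  have B1 : n1 (w k.+1) <= r * (1 - (/2)^(k.+1)).
    have := n1_le_tri (w k.+1) (w k); rewrite pow_half_S in IH2 *; lra.
  split => //.
  have Eq1 : w k.+2 = T (w k.+1) by [].
  have Eq2 : w k.+1 = T (w k) by [].
  rewrite Eq1 [X in vsub _ X]Eq2.
  have Hwk1 : n1 (w k.+1) <= r by have := pow_half_pos k.+1; nra.
  have Hwk : n1 (w k) <= r by nra.
  apply: Rle_trans (Hcon _ _ Hwk1 Hwk) _.
  rewrite (pow_half_S k.+1); nra.
have Tel : forall q j, n1 (vsub (w (q + j)%nat) (w q)) <= r * ((/2)^q - (/2)^(q + j)).
  move=> q; elim => [|j IH].
    rewrite addn0 vsub_self; lra.
  rewrite addnS.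
  have := n1_tri (w ((q + j)%N).+1) (w (q + j)%N) (w q).
  have := proj2 (Q (q + j)%nat); rewrite !pow_half_S; lra.
have Cau : forall q p, (q <= p)%N -> n1 (vsub (w p) (w q)) <= r * (/2)^q.
  move=> q p Hqp; rewrite -(subnKC Hqp); apply: Rle_trans (Tel _ _) _.
  have := pow_half_pos (q + (p - q)); nra.
have Hcc : forall i, Cauchy_crit (fun k => w k i).
  move=> i e He.
  have [N HN] := pow_lt_1_zero (/ 2) ltac:(rewrite Rabs_right; lra) (e / (r + 1))
    ltac:(apply: Rdiv_lt_0_compat; lra).
  exists N => p q /leP Hp /leP Hq; rewrite /R_dist.
  have Hb : forall a b, (N <= a)%N -> (a <= b)%N -> Rabs (w b i - w a i) < e.
    move=> a b Ha Hab.
    apply: Rle_lt_trans (abs_le_n1 (vsub (w b) (w a)) i) _.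
    apply: Rle_lt_trans (Cau _ _ Hab) _.
    have := HN a (leP Ha); rewrite Rabs_right; last by have := pow_half_pos a; lra.
    move=> H1; have := pow_half_pos a.
    have : r * (/ 2) ^ a <= (r + 1) * (/ 2) ^ a by have := pow_half_pos a; nra.
    have : (r + 1) * (/ 2) ^ a < (r + 1) * (e / (r + 1)) by apply: Rmult_lt_compat_l; lra.
    have -> : (r + 1) * (e / (r + 1)) = e by field; lra.
    lra.
  case: (leqP p q) => Hpq.
    by rewrite Rabs_minus_sym; apply: Hb.
  apply: Hb => //; exact: ltnW.
pose l := fun i => proj1_sig (R_complete _ (Hcc i)).
have Hl : forall i, Un_cv (fun k => w k i) (l i) := fun i => proj2_sig (R_complete _ (Hcc i)).
have Hlk : forall k, n1 (vsub l (w k)) <= mm * (r * (/2)^k).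
  move=> k; rewrite /mm sum_scalr; apply: sum_le => i; rewrite Rmult_1_l.
  apply: (lim_le (Hl i) (N := k)) => p Hkp.
  apply: Rle_trans (abs_le_n1 (vsub (w p) (w k)) i) _; exact: Cau.
have Hlr : n1 l <= r.
  apply: (lim_pow (C := mm * r)); first nra.
  move=> k; have := n1_le_tri l (w k); have := Hlk k; have := proj1 (Q k).
  have := pow_half_pos k; nra.
have Hfix : n1 (vsub (T l) l) <= 0.
  apply: (lim_pow (C := mm * r)); first nra.
  move=> k; have := n1_tri (T l) (T (w k)) l.
  have Eq2 : T (w k) = w k.+1 by [].
  have Hwk : n1 (w k) <= r by have := proj1 (Q k); have := pow_half_pos k; nra.
  have := Hcon _ _ Hlr Hwk; rewrite Eq2 (n1_symm (w k.+1)).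
  have := Hlk k; have := Hlk k.+1; rewrite pow_half_S.
  have := pow_half_pos k; nra.
exists l; split => //.
move=> i; have H2 := abs_le_n1 (vsub (T l) l) i; have H1 := Rabs_pos (vsub (T l) l i).
have : Rabs (vsub (T l) l i) = 0 by lra.
rewrite /vsub /T.
have -> : l i - F i (pt x v P s l) - l i = - F i (pt x v P s l) by ring.
rewrite Rabs_Ropp => H3.
case: (Req_dec (F i (pt x v P s l)) 0) => // Hn; exfalso; exact: (Rabs_no_R0 _ Hn).
Qed.

Lemma lagrange n m (f : vec n -> R) (g : vec n) (F : 'I_m -> vec n -> R) (J : 'I_m -> vec n) (x : vec n) :
  sdiff f g x -> (forall i, sdiff (F i) (J i) x) -> (forall i, F i x = 0) ->
  (forall y, (forall i, F i y = 0) -> f y <= f x) ->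
  (exists P : 'I_m -> vec n, forall i l, dot (J i) (P l) = if i == l then 1 else 0) ->
  ((exists lam : vec m, forall k, g k = \big[Rplus/0]_(i < m) (lam i * J i k)) \/
   (exists v : vec n, (forall i, dot (J i) v = 0) /\ dot g v <> 0)) ->
  exists lam : vec m, forall k, g k = \big[Rplus/0]_(i < m) (lam i * J i k).
Proof.
move=> Hf HF HF0 Hopt [P HJP] [// | [v0 [HJv0 Hgv0]]].
exfalso.
have [v [HJv Ha]] : exists v, (forall i, dot (J i) v = 0) /\ 0 < dot g v.
  case: (Rlt_le_dec 0 (dot g v0)) => H; first by exists v0.
  exists (vscale (-1) v0); split.
    by move=> i; rewrite dot_scale HJv0; ring.
  rewrite dot_scale; lra.
set a := dot g v in Ha.
pose CP := \big[Rplus/0]_(l < m) n1 (P l).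
have HCP : 0 <= CP by apply: sum_ge0 => l; exact: n1_ge0.
have Hng := n1_ge0 g; have Hnv := n1_ge0 v.
pose Cg := n1 g * CP.
have HCg : 0 <= Cg by rewrite /Cg; nra.
pose eta := a / (4 * (Cg + 1)).
have Heta : 0 < eta by apply: Rdiv_lt_0_compat; lra.
pose K := n1 v + CP * eta + 1.
have HK : 0 < K by rewrite /K; nra.
pose eps := a / (4 * K).
have Heps : 0 < eps by apply: Rdiv_lt_0_compat; lra.
have [df [Hdf Hff]] := Hf eps Heps.
have [s0 [Hs0 Hfe]] := feas HF HF0 HJP HJv Heta.
pose s := Rmin s0 (df / K) / 2.
have Hdk : 0 < df / K by apply: Rdiv_lt_0_compat.
have Hs : 0 < s by rewrite /s; have := Rmin_pos _ _ Hs0 Hdk; lra.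
have Hss0 : s < s0 by have := Rmin_l s0 (df / K); have := Rmin_pos _ _ Hs0 Hdk; rewrite /s; lra.
have HsK : s * K < df.
  have : s < df / K by have := Rmin_r s0 (df / K); have := Rmin_pos _ _ Hs0 Hdk; rewrite /s; lra.
  move=> H; have := Rmult_lt_compat_r K _ _ HK H.
  by have -> : df / K * K = df by field; lra.
have [w [HFw Hw]] := Hfe s (conj Hs Hss0).
set y := pt x v P s w.
have Hyx : vsub y x = vadd (vscale s v) (Pw P w).
  by apply: functional_extensionality => k; rewrite /y /pt /vsub /vadd /vscale; ring.
have HPw := Pw_bound P w; rewrite -/CP in HPw.
have Hny : n1 (vsub y x) <= s * (n1 v + CP * eta).
  rewrite Hyx; apply: Rle_trans (n1_add _ _) _; rewrite n1_scale Rabs_right; last lra.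
  have : n1 w * CP <= eta * s * CP by apply: Rmult_le_compat_r.
  nra.
have Hny2 : n1 (vsub y x) < df by rewrite /K in HsK; nra.
have Hxx : n1 (vsub x x) < df by rewrite vsub_self.
have B := Hff y x Hny2 Hxx.
have Hle := Hopt y HFw.
have Dg : dot g (vsub y x) = s * a + dot g (Pw P w) by rewrite Hyx dot_add dot_scale.
have Dgb : Rabs (dot g (Pw P w)) <= Cg * (eta * s).
  apply: Rle_trans (dot_bound _ _) _; rewrite /Cg.
  have : n1 (Pw P w) <= CP * (eta * s) by nra.
  move=> H; have := Rmult_le_compat_l _ _ _ Hng H; lra.
have C1 : Cg * (eta * s) <= s * a / 4.
  have -> : Cg * (eta * s) = s * a / 4 * (Cg / (Cg + 1)) by rewrite /eta; field; lra.
  have : Cg / (Cg + 1) <= 1.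
    apply: (Rmult_le_reg_r (Cg + 1)); first lra.
    have -> : Cg / (Cg + 1) * (Cg + 1) = Cg by field; lra. lra.
  move=> H; have : 0 <= s * a / 4 by nra. nra.
have C2 : eps * n1 (vsub y x) <= s * a / 4.
  have : eps * n1 (vsub y x) <= eps * (s * K) by apply: Rmult_le_compat_l; [lra | rewrite /K; nra].
  have -> : eps * (s * K) = s * a / 4 by rewrite /eps; field; lra.
  done.
have := Rabs_triang (f y - f x - dot g (vsub y x)) (dot g (vsub y x)).
have T1 := Rle_abs (- (f y - f x - dot g (vsub y x))).
rewrite Rabs_Ropp in T1.
have T2 := Rle_abs (- dot g (Pw P w)); rewrite Rabs_Ropp in T2.
move=> _.
nra.
Qed.

Lemma max_grad0 n (phi : vec n -> R) q A : sdiff phi q A -> (forall y, phi y <= phi A) -> forall i, q i = 0.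
Proof.
move=> Hs Hmax i; apply: NNPP => Hne.
have Hq : 0 < Rabs (q i) by apply: Rabs_pos_lt.
have [d [Hd H]] := Hs (Rabs (q i) / 2) ltac:(lra).
pose s := if Rle_dec 0 (q i) then d / 2 else - (d / 2).
have Hsq : s * q i = d / 2 * Rabs (q i).
  rewrite /s; case: (Rle_dec 0 (q i)) => Hc /=.
    by rewrite Rabs_right; [ring | lra].
  by rewrite Rabs_left; [ring | lra].
have Has : Rabs s = d / 2 by rewrite /s; case: (Rle_dec 0 (q i)) => _ /=; rewrite ?Rabs_Ropp Rabs_right; lra.
pose y := lin A (ek i) s.
have Ey : vsub y A = vscale s (ek i) by apply: functional_extensionality => k; rewrite /y /lin /vsub /vscale; ring.
have HAA : n1 (vsub A A) < d by rewrite vsub_self.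
have Hy : n1 (vsub y A) < d by rewrite Ey n1_scale n1_ek Has; lra.
have := H y A Hy HAA; rewrite Ey dot_scale dot_ek n1_scale n1_ek Has Hsq.
have := Hmax y.
have := Rle_abs (- (phi y - phi A - d / 2 * Rabs (q i))); rewrite Rabs_Ropp.
nra.
Qed.

Lemma concave_max n (phi : vec n -> R) q A : sdiff phi q A -> (forall i, q i = 0) ->
  (forall y l, 0 < l < 1 -> l * phi y + (1 - l) * phi A <= phi (lin A (vsub y A) l)) ->
  forall y, phi y <= phi A.
Proof.
move=> Hs Hq Hconc y; apply: Rnot_lt_le => Hlt.
set Dl := phi y - phi A.
have HD : 0 < Dl by rewrite /Dl; lra.
set h := vsub y A.
have Hh := n1_ge0 h.
have [d [Hd H]] := Hs (Dl / (2 * (n1 h + 1))) ltac:(apply: Rdiv_lt_0_compat; lra).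
pose l := Rmin (1 / 2) (d / (2 * (n1 h + 1))).
have Hl0 : 0 < l by apply: Rmin_pos; [lra | apply: Rdiv_lt_0_compat; lra].
have Hl1 : l < 1 by have := Rmin_l (1 / 2) (d / (2 * (n1 h + 1))); rewrite -/l; lra.
have Hl2 : l <= d / (2 * (n1 h + 1)) by exact: Rmin_r.
have Ez : vsub (lin A h l) A = vscale l h by apply: functional_extensionality => k; rewrite /lin /vsub /vscale; ring.
have Hz : n1 (vsub (lin A h l) A) < d.
  rewrite Ez n1_scale Rabs_right; last lra.
  have : l * n1 h <= d / (2 * (n1 h + 1)) * n1 h by apply: Rmult_le_compat_r.
  have -> : d / (2 * (n1 h + 1)) * n1 h = d / 2 * (n1 h / (n1 h + 1)) by field; lra.
  have : n1 h / (n1 h + 1) <= 1.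
    apply: (Rmult_le_reg_r (n1 h + 1)); first lra.
    have -> : n1 h / (n1 h + 1) * (n1 h + 1) = n1 h by field; lra. lra.
  nra.
have HAA : n1 (vsub A A) < d by rewrite vsub_self.
have := H _ _ Hz HAA.
have -> : dot q (vsub (lin A h l) A) = 0 by rewrite /dot sum_zero // => k; rewrite Hq; ring.
rewrite Ez n1_scale (Rabs_right l); last lra.
have := Hconc y l (conj Hl0 Hl1); rewrite -/h.
move=> Hc Hb.
have := Rle_abs (phi (lin A h l) - phi A - 0).
have E : Dl / (2 * (n1 h + 1)) * (l * n1 h) = l * Dl / 2 * (n1 h / (n1 h + 1)) by field; lra.
rewrite E in Hb.
have : n1 h / (n1 h + 1) <= 1.
  apply: (Rmult_le_reg_r (n1 h + 1)); first lra.
  have -> : n1 h / (n1 h + 1) * (n1 h + 1) = n1 h by field; lra. lra.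
rewrite /Dl in HD Hb *.
move=> Hr Habs.
have Hp : 0 <= l * (phi y - phi A) / 2 by nra.
have : l * (phi y - phi A) / 2 * (n1 h / (n1 h + 1)) <= l * (phi y - phi A) / 2 * 1
  by apply: Rmult_le_compat_l.
nra.
Qed.

Definition iB {D N : nat} : 'I_(1 + D + N) := lshift N (lshift D ord0).
Definition iG {D N : nat} (j : 'I_D) : 'I_(1 + D + N) := lshift N (rshift 1 j).
Definition iA {D N : nat} (j : 'I_N) : 'I_(1 + D + N) := rshift (1 + D) j.
Definition join {D N : nat} (b : R) (gm : vec D) (A : vec N) : vec (1 + D + N) :=
  fun k => match split k with
           | inl k1 => match split k1 with inl _ => b | inr j => gm j end
           | inr j => A j end.
Definition xG {D N : nat} (x : vec (1 + D + N)) : vec D := fun j => x (iG j).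
Definition xA {D N : nat} (x : vec (1 + D + N)) : vec N := fun j => x (iA j).

Lemma split_l m n (i : 'I_m) : split (lshift n i) = inl i.
Proof. exact: (unsplitK (inl _ i)). Qed.
Lemma split_r m n (i : 'I_n) : split (rshift m i) = inr i.
Proof. exact: (unsplitK (inr _ i)). Qed.

Lemma join_B D N b (gm : vec D) (A : vec N) : join b gm A iB = b.
Proof. by rewrite /join /iB split_l split_l. Qed.
Lemma join_G D N b (gm : vec D) (A : vec N) j : join b gm A (iG j) = gm j.
Proof. by rewrite /join /iG split_l split_r. Qed.
Lemma join_A D N b (gm : vec D) (A : vec N) j : join b gm A (iA j) = A j.
Proof. by rewrite /join /iA split_r. Qed.

Lemma vec_eq_join D N (y : vec (1 + D + N)) b gm A :
  y iB = b -> (forall j, y (iG j) = gm j) -> (forall j, y (iA j) = A j) ->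
  forall k, y k = join b gm A k.
Proof.
move=> HB HG HA k; rewrite /join.
case: splitP => [k1 Hk1 | j Hj].
  case: splitP => [k2 Hk2 | j Hj].
    have -> : k = iB.
      apply: val_inj; rewrite /iB /= Hk1 Hk2; case: k2 {Hk2} => [[|?] ?] //.
    done.
  have -> : k = iG j by apply: val_inj; rewrite /iG /= Hk1 Hj.
  exact: HG.
have -> : k = iA j by apply: val_inj; rewrite /iA /= Hj.
exact: HA.
Qed.

Lemma dot_join D N (y : vec (1 + D + N)) b gm A :
  dot (join b gm A) y = b * y iB + dot gm (xG y) + dot A (xA y).
Proof.
rewrite /dot big_split_ord /= big_split_ord /= big_ord1.
rewrite -/(lshift _ _).
have E1 : join b gm A (lshift N (lshift D ord0)) = b := join_B b gm A.
rewrite E1 /iB; congr (_ + _ + _).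
  by apply: sum_ext => j; rewrite (join_G b gm A j).
by apply: sum_ext => j; rewrite (join_A b gm A j).
Qed.

Lemma n1_join D N (y : vec (1 + D + N)) : n1 y = Rabs (y iB) + n1 (xG y) + n1 (xA y).
Proof. by rewrite /n1 big_split_ord /= big_split_ord /= big_ord1. Qed.

Lemma dot_vzero n (y : vec n) : dot vzero y = 0.
Proof. rewrite /dot sum_zero // => i; rewrite /vzero; ring. Qed.

Lemma n1_xA D N (y : vec (1 + D + N)) : n1 (xA y) <= n1 y.
Proof. rewrite (n1_join y); have := Rabs_pos (y iB); have := n1_ge0 (xG y); lra. Qed.
Lemma n1_xG D N (y : vec (1 + D + N)) : n1 (xG y) <= n1 y.
Proof. rewrite (n1_join y); have := Rabs_pos (y iB); have := n1_ge0 (xA y); lra. Qed.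

Lemma sdiff_blockA D N (h : vec N -> R) q (x : vec (1 + D + N)) : sdiff h q (xA x) ->
  sdiff (fun y => h (xA y)) (join 0 vzero q) x.
Proof.
move=> Hh eps He; have [d [Hd H]] := Hh eps He; exists d; split => // a b Ha Hb.
have Ha' : n1 (vsub (xA a) (xA x)) < d := Rle_lt_trans _ _ _ (n1_xA (vsub a x)) Ha.
have Hb' : n1 (vsub (xA b) (xA x)) < d := Rle_lt_trans _ _ _ (n1_xA (vsub b x)) Hb.
rewrite dot_join dot_vzero.
have -> : dot q (xA (vsub a b)) = dot q (vsub (xA a) (xA b)) by [].
have -> : h (xA a) - h (xA b) - (0 * vsub a b iB + 0 + dot q (vsub (xA a) (xA b))) =
   h (xA a) - h (xA b) - dot q (vsub (xA a) (xA b)) by ring.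
apply: Rle_trans (H _ _ Ha' Hb') _.
apply: Rmult_le_compat_l; first lra.
exact: (n1_xA (vsub a b)).
Qed.

Lemma sdiff_blockG D N (h : vec D -> R) q (x : vec (1 + D + N)) : sdiff h q (xG x) ->
  sdiff (fun y => h (xG y)) (join 0 q vzero) x.
Proof.
move=> Hh eps He; have [d [Hd H]] := Hh eps He; exists d; split => // a b Ha Hb.
have Ha' : n1 (vsub (xG a) (xG x)) < d := Rle_lt_trans _ _ _ (n1_xG (vsub a x)) Ha.
have Hb' : n1 (vsub (xG b) (xG x)) < d := Rle_lt_trans _ _ _ (n1_xG (vsub b x)) Hb.
rewrite dot_join dot_vzero.
have -> : dot q (xG (vsub a b)) = dot q (vsub (xG a) (xG b)) by [].
have -> : h (xG a) - h (xG b) - (0 * vsub a b iB + dot q (vsub (xG a) (xG b)) + 0) =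
   h (xG a) - h (xG b) - dot q (vsub (xG a) (xG b)) by ring.
apply: Rle_trans (H _ _ Ha' Hb') _.
apply: Rmult_le_compat_l; first lra.
exact: (n1_xG (vsub a b)).
Qed.

Lemma sdiff_blockB D N (x : vec (1 + D + N)) :
  sdiff (fun y => y iB) (join 1 vzero vzero) x.
Proof.
move=> eps He; exists 1; split; first lra; move=> a b _ _.
rewrite dot_join !dot_vzero.
have -> : a iB - b iB - (1 * vsub a b iB + 0 + 0) = 0 by rewrite /vsub; ring.
rewrite Rabs_R0; have := n1_ge0 (vsub a b); nra.
Qed.

Definition phi N D (mu : vec N) (sigma : mat N D) (ga : vec D -> R) (c : vec N -> R)
  beta (A : vec N) gamma (Abar : vec N) :=
  beta * dot (vsub Abar A) mu + ga (vadd gamma (vscale beta (trmv sigma (vsub Abar A)))) - c Abar.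

Lemma phi_A N D (mu : vec N) (sigma : mat N D) ga c beta A gamma :
  phi mu sigma ga c beta A gamma A = ga gamma - c A.
Proof.
have E0 : vsub A A = vzero by apply: functional_extensionality => k; rewrite /vsub /vzero; ring.
have E1 : vadd gamma (vscale beta (trmv sigma (vsub A A))) = gamma.
  apply: functional_extensionality => k; rewrite /vadd /vscale /trmv E0.
  rewrite sum_zero; [ring | move=> i; rewrite /vzero; ring].
rewrite /phi E1 E0 dot_vzero; ring.
Qed.

Lemma phi_sdiff N D (mu : vec N) (sigma : mat N D) ga Dga c Dc beta A gamma :
  is_C1 ga Dga -> is_C1 c Dc ->
  sdiff (phi mu sigma ga c beta A gamma)
        (fun i => beta * mu i - Dc A i + beta * mulmv sigma (Dga gamma) i) A.
Proof.
move=> Hga Hc.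
pose Phi := fun (j : 'I_D) (a : vec N) => gamma j + beta * \big[Rplus/0]_(i < N) (sigma i j * (a i - A i)).
pose M := fun (j : 'I_D) (i : 'I_N) => beta * sigma i j.
have HPhi : forall j, sdiff (Phi j) (M j) A.
  move=> j.
  have := sdiff_add (sdiff_dot (M j) A) (sdiff_const (gamma j - beta * \big[Rplus/0]_(i < N) (sigma i j * A i)) A).
  apply: sdiff_ext => [a | k]; last by rewrite /vadd /vzero; ring.
  rewrite /Phi /dot /M.
  have -> : \big[Rplus/0]_(i < N) (sigma i j * (a i - A i)) =
     \big[Rplus/0]_(i < N) (sigma i j * a i) - \big[Rplus/0]_(i < N) (sigma i j * A i).
    by rewrite -sum_sub; apply: sum_ext => i; ring.
  have -> : \big[Rplus/0]_(i < N) (beta * sigma i j * a i) = beta * \big[Rplus/0]_(i < N) (sigma i j * a i).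
    by rewrite sum_scal; apply: sum_ext => i; ring.
  ring.
have Eg : (fun j => Phi j A) = gamma.
  apply: functional_extensionality => j; rewrite /Phi sum_zero; [ring | move=> i; ring].
have Hf : sdiff ga (Dga gamma) (fun j => Phi j A) by rewrite Eg; exact: C1_sdiff.
have T2 := sdiff_chain HPhi Hf.
have T1 := sdiff_add (sdiff_dot (vscale beta mu) A) (sdiff_const (- beta * dot A mu) A).
have T3 := C1_sdiff Hc A.
have := sdiff_sub (sdiff_add T1 T2) T3.
apply: sdiff_ext => [a | k].
  rewrite /phi /dot /vscale.
  have -> : \big[Rplus/0]_(i < N) (vsub a A i * mu i) =
    \big[Rplus/0]_(i < N) (a i * mu i) - \big[Rplus/0]_(i < N) (A i * mu i).
    by rewrite -sum_sub; apply: sum_ext => i; rewrite /vsub; ring.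
  have -> : \big[Rplus/0]_(i < N) (beta * mu i * a i) = beta * \big[Rplus/0]_(i < N) (a i * mu i).
    by rewrite sum_scal; apply: sum_ext => i; ring.
  have -> : \big[Rplus/0]_(i < N) (A i * mu i) = \big[Rplus/0]_(i < N) (mu i * A i).
    by apply: sum_ext => i; ring.
  rewrite /Phi /vadd /trmv /vsub; ring.
rewrite /vsub /vadd /vscale /vzero /mulmv /M.
have -> : \big[Rplus/0]_(j < D) (Dga gamma j * (beta * sigma k j)) =
   beta * \big[Rplus/0]_(j < D) (sigma k j * Dga gamma j).
  by rewrite sum_scal; apply: sum_ext => j; ring.
ring.
Qed.

Lemma phi_concave N D (mu : vec N) (sigma : mat N D) ga c beta A gamma :
  concave_fun ga -> strictly_convex_fun c -> forall y l, 0 < l < 1 ->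
  l * phi mu sigma ga c beta A gamma y + (1 - l) * phi mu sigma ga c beta A gamma A <=
  phi mu sigma ga c beta A gamma (lin A (vsub y A) l).
Proof.
move=> Hga Hc y l Hl.
case: (classic (y = A)) => [-> | Hne].
  have -> : lin A (vsub A A) l = A by apply: functional_extensionality => k; rewrite /lin /vsub; ring.
  lra.
rewrite phi_A.
set h := vsub y A.
have Ez : vsub (lin A h l) A = vscale l h
  by apply: functional_extensionality => k; rewrite /lin /vsub /vscale; ring.
set u := vadd gamma (vscale beta (trmv sigma h)).
have Eg : vadd gamma (vscale beta (trmv sigma (vsub (lin A h l) A))) = vadd (vscale l u) (vscale (1 - l) gamma).
  apply: functional_extensionality => j; rewrite Ez /u /vadd /vscale /trmv.
  have -> : \big[Rplus/0]_(i < N) (sigma i j * (l * h i)) = l * \big[Rplus/0]_(i < N) (sigma i j * h i).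
    by rewrite sum_scal; apply: sum_ext => i; ring.
  ring.
have Hcg := Hga u gamma l (conj (Rlt_le _ _ (proj1 Hl)) (Rlt_le _ _ (proj2 Hl))).
have Ecz : lin A h l = vadd (vscale l y) (vscale (1 - l) A)
  by apply: functional_extensionality => k; rewrite /lin /h /vadd /vscale /vsub; ring.
have Hcc : c (lin A h l) <= l * c y + (1 - l) * c A.
  rewrite Ecz; apply: Rlt_le; exact: Hc.
rewrite /phi Eg Ez dot_scalel -/h -/u.
nra.
Qed.

Lemma part1 N D (mu : vec N) (sigma : mat N D) ga Dga c Dc :
  is_C1 ga Dga -> concave_fun ga -> is_C1 c Dc -> strictly_convex_fun c ->
  forall beta A gamma, Ct mu sigma ga c beta A gamma <->
    (forall i, beta * mu i - Dc A i + beta * mulmv sigma (Dga gamma) i = 0).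
Proof.
move=> HC1 Hconc HcC1 Hconv beta A gamma.
have Hs := phi_sdiff mu sigma beta A gamma HC1 HcC1.
have EC : Ct mu sigma ga c beta A gamma <-> forall y, phi mu sigma ga c beta A gamma y <= phi mu sigma ga c beta A gamma A.
  by rewrite phi_A.
rewrite EC; split.
  move=> Hmax; exact: max_grad0 Hs Hmax.
move=> Hq; apply: (concave_max Hs Hq).
exact: phi_concave.
Qed.

Lemma blk3_B N D (v : vec N) (M1 : mat N D) (M2 : mat N N) i : blk3 v M1 M2 i iB = v i.
Proof. exact: (join_B (v i) (M1 i) (M2 i)). Qed.
Lemma blk3_G N D (v : vec N) (M1 : mat N D) (M2 : mat N N) i j : blk3 v M1 M2 i (iG j) = M1 i j.
Proof. exact: (join_G (v i) (M1 i) (M2 i) j). Qed.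
Lemma blk3_A N D (v : vec N) (M1 : mat N D) (M2 : mat N N) i j : blk3 v M1 M2 i (iA j) = M2 i j.
Proof. exact: (join_A (v i) (M1 i) (M2 i) j). Qed.

Lemma xA_join D N b (gm : vec D) (A : vec N) : xA (join b gm A) = A.
Proof. by apply: functional_extensionality => j; rewrite /xA join_A. Qed.
Lemma xG_join D N b (gm : vec D) (A : vec N) : xG (join b gm A) = gm.
Proof. by apply: functional_extensionality => j; rewrite /xG join_G. Qed.


Unset Implicit Arguments.
Set Strict Implicit.

Module LA.
From mathcomp Require Import ssralg matrix mxalgebra.
From mathcomp Require Import Rstruct.
Open Scope R_scope.
Lemma la_rowspace (m n : nat) (J : 'I_m -> vec n) (g : vec n) :
  (exists lam : vec m, forall k, g k = \big[Rplus/0]_(i<m) (lam i * J i k)) \/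
  (exists v : vec n, (forall i, dot (J i) v = 0) /\ dot g v <> 0).
Proof.
pose Jm : 'M[R]_(m, n) := (\matrix_(i, k) J i k)%R.
pose gm : 'M[R]_(1, n) := (\matrix_(i, k) g k)%R.
case: (boolP (gm <= Jm)%MS) => H.
  left; case/submxP: H => Dm HD; exists (fun i => Dm ord0 i) => k.
  have := congr1 (fun M : 'M[R]_(1,n) => M ord0 k) HD.
  rewrite /= !mxE => ->; apply: eq_bigr => i _; rewrite mxE //.
right. rewrite submxE in H.
have [k0 Hk0] : exists k0, (gm *m cokermx Jm)%R ord0 k0 <> 0%R.
  apply: NNPP => Hn; move/negP: H; apply; apply/eqP/matrixP => i j.
  rewrite ord1; apply: NNPP => Hne; apply: Hn; exists j => Heq; apply: Hne; rewrite Heq mxE //.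
exists (fun k => cokermx Jm k k0); split.
  move=> i; have := congr1 (fun M : 'M[R]_(m,n) => M i k0) (mulmx_coker Jm).
  rewrite /= /dot => H0; transitivity ((Jm *m cokermx Jm)%R i k0); last first.
    by rewrite H0 mxE.
  rewrite mxE; apply: eq_bigr => k _; congr (_ * _); rewrite mxE //.
move: Hk0; rewrite mxE => Hk; move=> Hd; apply: Hk; rewrite /dot in Hd.
transitivity (\big[Rplus/0]_(i < n) (g i * cokermx Jm i k0)); last exact: Hd.
apply: eq_bigr => k _; congr (_ * _); rewrite mxE //.
Qed.

Lemma la_rightinv (m n : nat) (J : 'I_m -> vec n) :
  (forall lam : vec m, (forall k, \big[Rplus/0]_(i<m) (J i k * lam i) = 0) -> forall i, lam i = 0) ->
  exists P : 'I_m -> vec n, forall i l, dot (J i) (P l) = if i == l then 1 else 0.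
Proof.
move=> Hind.
pose Jm : 'M[R]_(m, n) := (\matrix_(i, k) J i k)%R.
have : row_free Jm.
  apply: inj_row_free => v Hv; apply/matrixP => a i; rewrite ord1 mxE.
  apply: (Hind (fun i => v ord0 i)) => k.
  have := congr1 (fun M : 'M[R]_(1,n) => M ord0 k) Hv.
  rewrite /= [in X in _ = X -> _]mxE mxE => H0; apply: eq_trans (H0); apply: eq_bigr => j _; rewrite mxE; apply: Rmult_comm.
case/row_freeP => B HB; exists (fun l k => B k l) => i l.
have := congr1 (fun M : 'M[R]_(m,m) => M i l) HB.
rewrite /= !mxE /dot => H0.
have -> : (if i == l then 1 else 0) = ((i == l)%:R)%R by case: (i == l).
rewrite -H0; apply: eq_bigr => k _; congr (_ * _); rewrite mxE //.
Qed.

End LA.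

Theorem mainTheorem9
  (T N d D : nat) (mu : vec N) (sigma : mat N D)
  (ga gp : nat -> vec D -> R) (c : nat -> vec N -> R)
  (Dga : nat -> vec D -> vec D) (Hga : nat -> vec D -> mat D D)
  (Dgp : nat -> vec D -> vec D)
  (Dc : nat -> vec N -> vec N) (Hc : nat -> vec N -> mat N N)
  (* sigma: N x d with linearly independent rows, padded with D - d zero columns *)
  (HNd : (N <= d)%N) (HdD : (d <= D)%N)
  (Hsig0 : forall (i : 'I_N) (j : 'I_D), (d <= j)%N -> sigma i j = 0)
  (Hsigind : full_row_rank sigma)
  (* generators: concave, vanishing at 0; costs strictly convex *)
  (Hga_conc : forall t, (t < T)%N -> concave_fun (ga t) /\ ga t vzero = 0)
  (Hgp_conc : forall t, (t < T)%N -> concave_fun (gp t) /\ gp t vzero = 0)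
  (Hc_conv : forall t, (t < T)%N -> strictly_convex_fun (c t))
  (* regularity: g^p C^1, g^a and c C^2 *)
  (Hgp_C1 : forall t, (t < T)%N -> is_C1 (gp t) (Dgp t))
  (Hga_C2 : forall t, (t < T)%N -> is_C2 (ga t) (Dga t) (Hga t))
  (Hc_C2 : forall t, (t < T)%N -> is_C2 (c t) (Dc t) (Hc t)) :
  (forall t, (t < T)%N -> forall (beta : R) (A : vec N) (gamma : vec D),
      Ct mu sigma (ga t) (c t) beta A gamma <->
      (forall i, beta * mu i - Dc t A i + beta * mulmv sigma (Dga t gamma) i = 0))
  /\
  (forall (At : nat -> vec N) (betat : nat -> R) (gammat : nat -> vec D),
      optimal_contract T mu sigma ga gp c At betat gammat ->
      (forall t, (t < T)%N ->
         full_row_rank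
           (blk3 (vadd mu (mulmv sigma (Dga t (gammat t))))
                 (fun i k => betat t * mulmm sigma (Hga t (gammat t)) i k)
                 (fun i k => - Hc t (At t) i k))) ->
      forall t, (t < T)%N -> exists lam : vec N,
        (forall i, betat t * mu i - Dc t (At t) i
                   + betat t * mulmv sigma (Dga t (gammat t)) i = 0) /\
        (forall i, mu i - Dc t (At t) i
                   + mulmv sigma (Dgp t (vsub (trmv sigma (At t)) (gammat t))) i
                   - mulmv (Hc t (At t)) lam i = 0) /\
        (forall j, Dga t (gammat t) j
                   - Dgp t (vsub (trmv sigma (At t)) (gammat t)) j
                   + betat t * mulmv (Hga t (gammat t)) (trmv sigma lam) j = 0) /\
        dot lam (vadd mu (mulmv sigma (Dga t (gammat t)))) = 0).
Proof.
have P1 : forall t, (t < T)%N -> forall beta A gamma, Ct mu sigma (ga t) (c t) beta A gamma <->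
      (forall i, beta * mu i - Dc t A i + beta * mulmv sigma (Dga t gamma) i = 0).
  move=> t Ht; exact: part1 (proj1 (Hga_C2 t Ht)) (proj1 (Hga_conc t Ht))
    (proj1 (Hc_C2 t Ht)) (Hc_conv t Ht).
split => //.
move=> At betat gammat Hopt Hrank t Ht.
have [HCt Hmax] := Hopt t Ht.
have FOC := (P1 t Ht _ _ _).1 HCt.
pose xs : vec (1 + D + N) := join (betat t) (gammat t) (At t).
have HxA : xA xs = At t by exact: xA_join.
have HxG : xG xs = gammat t by exact: xG_join.
have HxB : xs iB = betat t by exact: join_B.
pose F := fun (i : 'I_N) (y : vec (1 + D + N)) =>
  y iB * mu i - Dc t (xA y) i + y iB * mulmv sigma (Dga t (xG y)) i.
pose v := vadd mu (mulmv sigma (Dga t (gammat t))).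
pose M1 := fun i k => betat t * mulmm sigma (Hga t (gammat t)) i k.
pose M2 := fun i k => - Hc t (At t) i k.
pose J := fun (i : 'I_N) => blk3 v M1 M2 i.
have HF : forall i, sdiff (F i) (J i) xs.
  move=> i.
  have SB := @sdiff_blockB D N xs.
  have S1 := sdiff_mul SB (sdiff_const (mu i) xs).
  have S2 := sdiff_blockA (C1_sdiff ((proj2 (Hc_C2 t Ht)) i) (xA xs)).
  have S3 := sdiff_sum (fun j => sdiff_scal (sigma i j)
      (sdiff_blockG (C1_sdiff ((proj2 (Hga_C2 t Ht)) j) (xG xs)))).
  have S4 := sdiff_mul SB S3.
  have := sdiff_add (sdiff_sub S1 S2) S4.
  apply: sdiff_ext => [y | ]; first by [].
  apply: (vec_eq_join (b := v i) (gm := M1 i) (A := M2 i)).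
  - rewrite /vadd /vsub /vscale /vzero /= !join_B sum_zero; last by move=> j; rewrite join_B; ring.
    rewrite HxG /v /vadd /mulmv; simpl; ring.
  - move=> j; rewrite /vadd /vsub /vscale /vzero /= !join_G.
    under eq_bigr do rewrite join_G.
    rewrite HxB HxG /M1 /mulmm sum_scal; ring.
  - move=> j; rewrite /vadd /vsub /vscale /vzero /= !join_A sum_zero; last by move=> j0; rewrite join_A; ring.
    rewrite HxA /M2; ring.
have HF0 : forall i, F i xs = 0.
  move=> i; rewrite /F HxB HxA HxG; exact: FOC.
pose f := fun y : vec (1 + D + N) => principal_obj mu sigma (ga t) (gp t) (c t) (xA y) (xG y).
have Hfopt : forall y, (forall i, F i y = 0) -> f y <= f xs.
  move=> y Hy; have HC : Ct mu sigma (ga t) (c t) (y iB) (xA y) (xG y) by apply/(P1 t Ht); exact: Hy.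
  rewrite /f HxA HxG; exact: Hmax _ _ _ HC.
have Hd : sdiff (fun A : vec N => dot A mu) mu (xA xs).
  exact: (sdiff_ext (fun a => dot_comm mu a) (fun k => erefl) (sdiff_dot mu (xA xs))).
have O1 := sdiff_blockA Hd.
have O2 := sdiff_blockA (C1_sdiff (proj1 (Hc_C2 t Ht)) (xA xs)).
have O3 := sdiff_blockG (C1_sdiff (proj1 (Hga_C2 t Ht)) (xG xs)).
have HPhi : forall j, sdiff (fun y => trmv sigma (xA y) j - xG y j)
    (vsub (join 0 vzero (fun i => sigma i j)) (join 0 (ek j) vzero)) xs.
  move=> j; exact: (sdiff_sub (sdiff_blockA (sdiff_dot (fun i => sigma i j) (xA xs)))
                      (sdiff_blockG (sdiff_coord j (xG xs)))).
have Hgp : sdiff (gp t) (Dgp t (vsub (trmv sigma (At t)) (gammat t))) (fun j => trmv sigma (xA xs) j - xG xs j).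
  have Ept : (fun j => trmv sigma (xA xs) j - xG xs j) = vsub (trmv sigma (At t)) (gammat t) by rewrite HxA HxG.
  by rewrite Ept; exact: C1_sdiff (Hgp_C1 t Ht) _.
have O4 := sdiff_chain HPhi Hgp.
have Hfs : sdiff f _ xs := sdiff_add (sdiff_add (sdiff_sub O1 O2) O3) O4.
have Hrk : forall lam : vec N, (forall k, \big[Rplus/0]_(i < N) (J i k * lam i) = 0) -> forall i, lam i = 0.
  exact: (Hrank t Ht).
have [lam Hlam] := lagrange Hfs HF HF0 Hfopt (@LA.la_rightinv _ _ J Hrk) (@LA.la_rowspace _ _ J _).
exists (fun i => - lam i); split; first exact: FOC.
split.
  move=> i0; have := Hlam (iA i0).
  rewrite /vadd /vsub /= !join_A HxA.
  under eq_bigr do rewrite !join_A.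
  rewrite /J; under [in X in _ = X -> _]eq_bigr do rewrite blk3_A.
  move=> HH.
  have E1 : mulmv sigma (Dgp t (fun i : 'I_D => trmv sigma (At t) i - gammat t i)) i0 =
     \big[Rplus/0]_(i < D) (Dgp t (fun i0 : 'I_D => trmv sigma (At t) i0 - gammat t i0) i *
                           (sigma i0 i - vzero i0)).
    by rewrite /mulmv /vzero; apply: sum_ext => j; ring.
  have E2 : mulmv (Hc t (At t)) (fun i : 'I_N => - lam i) i0 = \big[Rplus/0]_(i < N) (lam i * M2 i i0).
    rewrite /mulmv /M2; apply: sum_ext => j.
    rewrite (schwarz (Hc_C2 t Ht) (At t) i0 j); ring.
  rewrite E1 E2 -HH /vzero; simpl; ring.
split.
  move=> j0; have := Hlam (iG j0).
  rewrite /vadd /vsub /= !join_G HxG.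
  under eq_bigr do rewrite !join_G.
  rewrite /J; under [in X in _ = X -> _]eq_bigr do rewrite blk3_G.
  have E1 : forall u : vec D, \big[Rplus/0]_(j < D) (u j * (vzero j0 - ek j j0)) = - u j0.
    move=> u; rewrite -(@sum_delta' D u j0) -sum_neg; apply: sum_ext => j.
    rewrite /ek /vzero eq_sym; ring.
  rewrite E1 => HH.
  have E2 : betat t * mulmv (Hga t (gammat t)) (trmv sigma (fun i => - lam i)) j0 =
      - \big[Rplus/0]_(i < N) (lam i * M1 i j0).
    transitivity (\big[Rplus/0]_(j < D) \big[Rplus/0]_(i < N)
        (betat t * Hga t (gammat t) j0 j * sigma i j * - lam i)).
      rewrite /mulmv /trmv sum_scal; apply: eq_bigr => j _; rewrite -Rmult_assoc sum_scal; apply: eq_bigr => i _; ring.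
    rewrite sum_swap -sum_neg; apply: sum_ext => i.
    rewrite /M1 /mulmm.
    have -> : - (lam i * (betat t * \big[Rplus/0]_(j < D) (sigma i j * Hga t (gammat t) j j0))) =
       (- lam i * betat t) * \big[Rplus/0]_(j < D) (sigma i j * Hga t (gammat t) j j0) by ring.
    rewrite sum_scal; apply: sum_ext => j.
    rewrite (schwarz (Hga_C2 t Ht) (gammat t) j0 j); ring.
  rewrite E2 -HH /vzero; simpl; ring.
have := Hlam iB.
rewrite /vadd /vsub /= !join_B.
under eq_bigr do rewrite !join_B.
rewrite /J; under [in X in _ = X -> _]eq_bigr do rewrite blk3_B.
move=> HH.
have E : dot (fun i => - lam i) v = - \big[Rplus/0]_(i < N) (lam i * v i).
  by rewrite /dot -sum_neg; apply: sum_ext => i; ring.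
rewrite -/v E -HH sum_zero; last by move=> j; rewrite /vzero; ring.
rewrite /vzero; ring.
Qed.
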